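(* Let $r\ge1$, $f,g\in H^r(\mathbb T)$ and $\tau>0$. Then $$\|\Psi_1^\tau(f)-\Psi_1^\tau(g)\|_r\le(1+M\tau)\|f-g\|_r,$$ where $M$ depends on $r$ and $\|f\|_r+\|g\|_r$.
   Context: $\mathbb{T}=[-\pi,\pi]$ periodic; $\widehat f_k=\frac1{2\pi}\int_{\mathbb T}f(x)e^{-ikx}dx$; $H^s$ norm $\|f\|_s^2=\sum_k(1+k^2)^s|\widehat f_k|^2$, $\|f\|=\|f\|_0$; $\bar f$ the complex conjugate. Fourier multipliers: $\partial_x^{-m}$ ($m\ge1$) has symbol $(ik)^{-m}$ for $k\ne0$ and $0$ for $k=0$; $\partial_x^m$ has symbol $(ik)^m$; $e^{it\partial_x^2}$ has symbol $e^{-itk^2}$; $\langle\partial_x^2\rangle$ has symbol $\sqrt{k^2+k^4}$; $\langle\partial_x^2\rangle^{-1}$ has symbol $(k^2+k^4)^{-1/2}$ for $k\neq0$, $0$ for $k=0$; $e^{i\tau\langle\partial_x^2\rangle}$ has symbol $e^{i\tau\sqrt{k^2+k^4}}$. $B=\langle\partial_x^2\rangle^{-1}\partial_x^2$, $B^\tau f=Be^{i\tau\langle\partial_x^2\rangle}f$, $\psi_1(y)=\int_0^1e^{ys}ds$, and $\psi_1(2i\tau\partial_x^2)$ has symbol $\psi_1(-2i\tau k^2)$. Fixed real numbers $a,b$ and a time $t_n\ge0$ are given. Define for a function $f$: $L_1^\tau(f)=-\frac i2\partial_x^{-2}[(e^{2i\tau\partial_x^2}\partial_x^{-2}\bar f)(\partial_x^2\bar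 f)]+\frac i2\partial_x^{-2}[(\partial_x^2\bar f)(\partial_x^{-2}\bar f)]$; $L_2^\tau(f)=-\frac i2e^{i\tau\partial_x^2}\partial_x^{-3}[(e^{i\tau\partial_x^2}\partial_x\bar f)(e^{-i\tau\partial_x^2}\bar f)]+\frac i2\partial_x^{-3}[(\partial_x\bar f)\bar f]-\tau\partial_x^{-2}[(\partial_x^2\bar f)\bar f]$; $L_3^\tau(f)=-i\partial_x^{-4}(e^{2i\tau\partial_x^2}-1)(\partial_x\bar f)^2$; $L_4^\tau(f)=i\partial_x^{-2}e^{-i\tau\partial_x^2}(e^{i\tau\partial_x^2}\bar f)^2-i\partial_x^{-2}(\bar f)^2-2\tau\partial_x^{-2}(\partial_x\bar f)^2$; $I_1^\tau(f)=\frac i2[(\partial_x^{-1}f)^2-e^{i\tau\partial_x^2}(e^{-i\tau\partial_x^2}\partial_x^{-1}f)^2]$; $I_2^\tau(f)=-\frac i2e^{i\tau\partial_x^2}\partial_x^{-1}[(e^{-i\tau\partial_x^2}f)(e^{i\tau\partial_x^2}\partial_x^{-1}\bar f)]+\frac i2\partial_x^{-1}[f\,\partial_x^{-1}\bar f]+\tau\|f\|^2$; $\Psi_1^\tau(f)=e^{i\tau\langle\partial_x^2\rangle}f-\frac i4B^\tau[2L_1^\tau(f)+2L_2^\tau(f)+L_3^\tau(f)+L_4^\tau(f)+I_1^\tau(f)+2I_2^\tau(f)]-i\tau(at_n+b)B^\tau(f+\psi_1(2i\tau\partial_x^2)\bar f)$. *)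

(* Defs.v *)
From Stdlib Require Import Reals ZArith.
From Coquelicot Require Import Coquelicot.
Open Scope R_scope.

(* A (distribution-valued) function on T = [-pi,pi] periodic is represented by
   its Fourier coefficients  k |-> \hat f_k  (k : Z), with
   \hat f_k = 1/(2 pi) \int_T f(x) e^{-ikx} dx. *)
Definition Four := Z -> C.

Definition exZ (u : Z -> R) : Prop :=
  ex_series (fun n => u (Z.of_nat n)) /\ ex_series (fun n => u (- Z.of_nat (S n))%Z).
Definition sumZ (u : Z -> R) : R :=
  Series (fun n => u (Z.of_nat n)) + Series (fun n => u (- Z.of_nat (S n))%Z).
Definition sumZC (u : Z -> C) : C := (sumZ (fun k => fst (u k)), sumZ (fun k => snd (u k))).

Definition Hs_weight (s : R) (k : Z) : R := Rpower (1 + IZR k ^ 2) s.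
Definition inH (s : R) (f : Four) : Prop :=
  exZ (fun k => Hs_weight s k * Cmod (f k) ^ 2).
Definition normH (s : R) (f : Four) : R :=
  sqrt (sumZ (fun k => Hs_weight s k * Cmod (f k) ^ 2)).

Definition fadd (f g : Four) : Four := fun k => Cplus (f k) (g k).
Definition fsub (f g : Four) : Four := fun k => Cminus (f k) (g k).
Definition fscal (c : C) (f : Four) : Four := fun k => Cmult c (f k).

(* pointwise product of functions = convolution of Fourier coefficients *)
Definition fmul (f g : Four) : Four :=
  fun k => sumZC (fun j => Cmult (f j) (g (k - j)%Z)).
(* complex conjugate:  \hat{\bar f}_k = conj (\hat f_{-k}) *)
Definition fconj (f : Four) : Four := fun k => Cconj (f (- k)%Z).
Definition fconst (c : C) : Four := fun k => if Z.eqb k 0 then c else RtoC 0.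

Fixpoint cpow (z : C) (n : nat) : C :=
  match n with O => RtoC 1 | S m => Cmult z (cpow z m) end.
Definition expi (t : R) : C := (cos t, sin t).
(* d^m, symbol (ik)^m *)
Definition dpos (m : nat) (f : Four) : Four :=
  fun k => Cmult (cpow (Cmult Ci (RtoC (IZR k))) m) (f k).
(* d^{-m}, symbol (ik)^{-m} for k <> 0 and 0 for k = 0 *)
Definition dneg (m : nat) (f : Four) : Four :=
  fun k => if Z.eqb k 0 then RtoC 0 else Cdiv (f k) (cpow (Cmult Ci (RtoC (IZR k))) m).
(* e^{it d^2}, symbol e^{-itk^2} *)
Definition schr (t : R) (f : Four) : Four :=
  fun k => Cmult (expi (- t * IZR k ^ 2)) (f k).
Definition omega (k : Z) : R := sqrt (IZR k ^ 2 + IZR k ^ 4).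
Definition eomega (tau : R) (f : Four) : Four :=
  fun k => Cmult (expi (tau * omega k)) (f k).
(* B = <d^2>^{-1} d^2, symbol (k^2+k^4)^{-1/2} (-k^2) for k<>0, 0 for k=0 *)
Definition Bop (f : Four) : Four :=
  fun k => if Z.eqb k 0 then RtoC 0
           else Cmult (RtoC (- IZR k ^ 2 / omega k)) (f k).
Definition Btau (tau : R) (f : Four) : Four := Bop (eomega tau f).
(* psi_1(y) = \int_0^1 e^{ys} ds, evaluated at y = -2 i tau k^2:
   equals 1 if y = 0 and (e^y - 1)/y otherwise *)
Definition psi1_sym (tau : R) (k : Z) : C :=
  let y := Cmult Ci (RtoC (- 2 * tau * IZR k ^ 2)) in
  if Req_EM_T (- 2 * tau * IZR k ^ 2) 0 then RtoC 1
  else Cdiv (Cminus (expi (- 2 * tau * IZR k ^ 2)) (RtoC 1)) y.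
Definition psi1op (tau : R) (f : Four) : Four := fun k => Cmult (psi1_sym tau k) (f k).

Definition ihalf : C := Cmult Ci (RtoC (1/2)).

Definition L1 (tau : R) (f : Four) : Four :=
  let fb := fconj f in
  fadd (fscal (Copp ihalf) (dneg 2 (fmul (schr (2*tau) (dneg 2 fb)) (dpos 2 fb))))
       (fscal ihalf (dneg 2 (fmul (dpos 2 fb) (dneg 2 fb)))).

Definition L2 (tau : R) (f : Four) : Four :=
  let fb := fconj f in
  fsub
   (fadd (fscal (Copp ihalf)
            (schr tau (dneg 3 (fmul (schr tau (dpos 1 fb)) (schr (- tau) fb)))))
         (fscal ihalf (dneg 3 (fmul (dpos 1 fb) fb))))
   (fscal (RtoC tau) (dneg 2 (fmul (dpos 2 fb) fb))).

Definition L3 (tau : R) (f : Four) : Four :=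
  let fb := fconj f in
  let h := fmul (dpos 1 fb) (dpos 1 fb) in
  fscal (Copp Ci) (dneg 4 (fsub (schr (2*tau) h) h)).

Definition L4 (tau : R) (f : Four) : Four :=
  let fb := fconj f in
  fsub
   (fsub (fscal Ci (dneg 2 (schr (- tau) (fmul (schr tau fb) (schr tau fb)))))
         (fscal Ci (dneg 2 (fmul fb fb))))
   (fscal (RtoC (2 * tau)) (dneg 2 (fmul (dpos 1 fb) (dpos 1 fb)))).

Definition I1 (tau : R) (f : Four) : Four :=
  fscal ihalf
    (fsub (fmul (dneg 1 f) (dneg 1 f))
          (schr tau (fmul (schr (- tau) (dneg 1 f)) (schr (- tau) (dneg 1 f))))).

Definition I2 (tau : R) (f : Four) : Four :=
  let fb := fconj f in
  fadd
   (fadd (fscal (Copp ihalf)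
            (schr tau (dneg 1 (fmul (schr (- tau) f) (schr tau (dneg 1 fb))))))
         (fscal ihalf (dneg 1 (fmul f (dneg 1 fb)))))
   (fconst (RtoC (tau * normH 0 f ^ 2))).

Definition Psi1 (a b tn tau : R) (f : Four) : Four :=
  fsub
   (fsub (eomega tau f)
         (fscal (Cmult Ci (RtoC (1/4)))
            (Btau tau
               (fadd (fscal (RtoC 2) (L1 tau f))
               (fadd (fscal (RtoC 2) (L2 tau f))
               (fadd (L3 tau f)
               (fadd (L4 tau f)
               (fadd (I1 tau f)
                     (fscal (RtoC 2) (I2 tau f))))))))))
   (fscal (Cmult Ci (RtoC (tau * (a * tn + b))))
      (Btau tau (fadd f (psi1op tau (fconj f))))).

(* Main.v *)
Require Import Defs.
From Stdlib Require Import Reals ZArith Lra Lia Psatz.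
From Coquelicot Require Import Coquelicot.
Open Scope R_scope.

Lemma sum_n_nonneg (a : nat -> R) N : (forall n, 0 <= a n) -> 0 <= sum_n a N.
Proof. intros H; induction N. rewrite sum_O; auto. rewrite sum_Sn. unfold plus; simpl. specialize (H (S N)); lra. Qed.

Lemma sum_n_incr (a : nat -> R) N : (forall n, 0 <= a n) -> sum_n a N <= sum_n a (S N).
Proof. intros H; rewrite sum_Sn; unfold plus; simpl; specialize (H (S N)); lra. Qed.

Lemma sum_n_mono (a : nat -> R) N M : (forall n, 0 <= a n) -> (N <= M)%nat -> sum_n a N <= sum_n a M.
Proof. intros H HNM; induction HNM. lra. eapply Rle_trans; [apply IHHNM|apply sum_n_incr; auto]. Qed.

Lemma is_series_lim (a : nat -> R) (l : R) : is_series a l -> is_lim_seq (sum_n a) l.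
Proof. intro H; exact H. Qed.
Lemma lim_is_series (a : nat -> R) (l : R) : is_lim_seq (sum_n a) l -> is_series a l.
Proof. intro H; exact H. Qed.

Lemma nn_series_bound (a : nat -> R) B : (forall n, 0 <= a n) -> (forall N, sum_n a N <= B) -> ex_series a /\ Series a <= B.
Proof.
  intros Ha HB.
  assert (E: ex_finite_lim_seq (sum_n a)) by (apply ex_finite_lim_seq_incr with B; auto using sum_n_incr).
  destruct E as [l Hl].
  assert (Hs: is_series a l) by (apply lim_is_series; auto).
  split. exists l; auto.
  rewrite (is_series_unique _ _ Hs).
  assert (Rbar_le l B). apply is_lim_seq_le with (sum_n a) (fun _ => B); auto. apply is_lim_seq_const.
  simpl in H; auto.
Qed.

Lemma nn_partial_le (a : nat -> R) N : (forall n, 0 <= a n) -> ex_series a -> sum_n a N <= Series a.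
Proof.
  intros Ha [l Hl]. rewrite (is_series_unique _ _ Hl).
  apply is_series_lim in Hl.
  assert (Rbar_le (sum_n a N) l).
  apply is_lim_seq_le_loc with (fun _ => sum_n a N) (sum_n a); auto.
  exists N; intros n Hn; apply sum_n_mono; auto. apply is_lim_seq_const.
  simpl in H; auto.
Qed.

Lemma nn_series_nonneg (a : nat -> R) : (forall n, 0 <= a n) -> ex_series a -> 0 <= Series a.
Proof. intros Ha E. eapply Rle_trans; [apply (sum_n_nonneg a 0 Ha)| apply nn_partial_le; auto]. Qed.

Fixpoint zs (u : Z -> R) (a : Z) (n : nat) : R :=
  match n with O => 0 | S m => zs u a m + u (a + Z.of_nat m)%Z end.

Lemma zs_S u a n : zs u a (S n) = zs u a n + u (a + Z.of_nat n)%Z.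
Proof. reflexivity. Qed.

Lemma zs_front u a n : zs u a (S n) = u a + zs u (a+1) n.
Proof.
  induction n. simpl. rewrite Z.add_0_r; ring.
  rewrite (zs_S u a (S n)), IHn, (zs_S u (a+1) n).
  replace (a + 1 + Z.of_nat n)%Z with (a + Z.of_nat (S n))%Z by lia. ring.
Qed.

Lemma zs_app u a n m : zs u a (n+m) = zs u a n + zs u (a + Z.of_nat n) m.
Proof.
  induction m. simpl; rewrite Nat.add_0_r; ring.
  rewrite Nat.add_succ_r; simpl; rewrite IHm.
  replace (a + Z.of_nat (n + m))%Z with (a + Z.of_nat n + Z.of_nat m)%Z by lia. ring.
Qed.

Lemma zs_ext u v a n : (forall j, u j = v j) -> zs u a n = zs v a n.
Proof. intros H; induction n; simpl; auto. rewrite IHn, H; auto. Qed.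

Lemma zs_nonneg u a n : (forall j, 0 <= u j) -> 0 <= zs u a n.
Proof. intros H; induction n; simpl. lra. specialize (H (a + Z.of_nat n)%Z); lra. Qed.

Lemma zs_mono u v a n : (forall j, u j <= v j) -> zs u a n <= zs v a n.
Proof. intros H; induction n; simpl. lra. specialize (H (a + Z.of_nat n)%Z); lra. Qed.

Lemma zs_plus u v a n : zs (fun j => u j + v j) a n = zs u a n + zs v a n.
Proof. induction n; simpl. ring. rewrite IHn; ring. Qed.

Lemma zs_scal c u a n : zs (fun j => c * u j) a n = c * zs u a n.
Proof. induction n; simpl. ring. rewrite IHn; ring. Qed.

Lemma zs_sub u a n a' n' : (forall j, 0 <= u j) -> (a' <= a)%Z ->
  (a + Z.of_nat n <= a' + Z.of_nat n')%Z -> zs u a n <= zs u a' n'.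
Proof.
  intros H H1 H2.
  set (p := Z.to_nat (a - a')).
  set (q := (n' - p - n)%nat).
  assert (Hn' : n' = (p + (n + q))%nat) by (unfold q, p; lia).
  rewrite Hn', zs_app, zs_app.
  replace (a' + Z.of_nat p)%Z with a by (unfold p; lia).
  pose proof (zs_nonneg u a' p H). pose proof (zs_nonneg u (a + Z.of_nat n) q H). lra.
Qed.

Lemma zs_refl u k a n : zs (fun j => u (k - j)%Z) a n = zs u (k - a - Z.of_nat n + 1)%Z n.
Proof.
  induction n. reflexivity.
  change (zs (fun j => u (k - j)%Z) a (S n)) with (zs (fun j => u (k - j)%Z) a n + u (k - (a + Z.of_nat n))%Z).
  rewrite IHn, zs_front.
  replace (k - a - Z.of_nat (S n) + 1 + 1)%Z with (k - a - Z.of_nat n + 1)%Z by lia.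
  replace (k - a - Z.of_nat (S n) + 1)%Z with (k - (a + Z.of_nat n))%Z by lia. ring.
Qed.

Lemma plusR (x y : R) : plus x y = x + y.
Proof. reflexivity. Qed.

Lemma sum_pos_zs (u : Z -> R) N : sum_n (fun n => u (Z.of_nat n)) N = zs u 0 (S N).
Proof.
  induction N. rewrite sum_O; simpl. symmetry; apply Rplus_0_l.
  rewrite sum_Sn, IHN. unfold plus; simpl. reflexivity.
Qed.

Lemma sum_neg_zs (u : Z -> R) N : sum_n (fun n => u (- Z.of_nat (S n))%Z) N = zs u (- Z.of_nat (S N))%Z (S N).
Proof.
  induction N. rewrite sum_O; simpl. symmetry; apply Rplus_0_l.
  rewrite sum_Sn, IHN, plusR.
  rewrite (zs_front u (- Z.of_nat (S (S N)))%Z (S N)).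
  replace (- Z.of_nat (S (S N)) + 1)%Z with (- Z.of_nat (S N))%Z by lia. apply Rplus_comm.
Qed.

Definition PZ (u : Z -> R) N := zs u (- Z.of_nat (S N))%Z (2 * S N).

Lemma PZ_split (u : Z -> R) N : PZ u N = sum_n (fun n => u (Z.of_nat n)) N + sum_n (fun n => u (- Z.of_nat (S n))%Z) N.
Proof.
  unfold PZ. rewrite sum_pos_zs, sum_neg_zs.
  replace (2 * S N)%nat with (S N + S N)%nat by lia. rewrite zs_app.
  replace (- Z.of_nat (S N) + Z.of_nat (S N))%Z with 0%Z by lia. ring.
Qed.

Definition nneg (u : Z -> R) := forall j, 0 <= u j.

Lemma Z1 u B : nneg u -> (forall N, PZ u N <= B) -> exZ u /\ sumZ u <= B.
Proof.
  intros Hu HB.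
  assert (Hp : forall n, 0 <= u (Z.of_nat n)) by (intros; apply Hu).
  assert (Hn : forall n, 0 <= u (- Z.of_nat (S n))%Z) by (intros; apply Hu).
  assert (E1: ex_series (fun n => u (Z.of_nat n))).
  { apply (nn_series_bound _ B Hp). intros N. pose proof (HB N). rewrite PZ_split in H.
    pose proof (sum_n_nonneg _ N Hn). lra. }
  assert (E2: ex_series (fun n => u (- Z.of_nat (S n))%Z)).
  { apply (nn_series_bound _ B Hn). intros N. pose proof (HB N). rewrite PZ_split in H.
    pose proof (sum_n_nonneg _ N Hp). lra. }
  split. split; auto.
  unfold sumZ.
  assert (L: is_lim_seq (PZ u) (Series (fun n => u (Z.of_nat n)) + Series (fun n => u (- Z.of_nat (S n))%Z))).
  { eapply is_lim_seq_ext. intros n; symmetry; apply PZ_split.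
    apply (is_lim_seq_plus' _ _ (Series (fun n => u (Z.of_nat n))) (Series (fun n => u (- Z.of_nat (S n))%Z))).
    apply is_series_lim, Series_correct, E1. apply is_series_lim, Series_correct, E2. }
  assert (Rbar_le (Series (fun n => u (Z.of_nat n)) + Series (fun n => u (- Z.of_nat (S n))%Z)) B).
  apply is_lim_seq_le with (PZ u) (fun _ => B); auto. apply is_lim_seq_const.
  simpl in H; auto.
Qed.

Lemma Z2 u N : nneg u -> exZ u -> PZ u N <= sumZ u.
Proof.
  intros Hu [E1 E2]. rewrite PZ_split. unfold sumZ.
  pose proof (nn_partial_le _ N (fun n => Hu _) E1).
  pose proof (nn_partial_le _ N (fun n => Hu _) E2). lra.
Qed.

Lemma PZ_nonneg u N : nneg u -> 0 <= PZ u N.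
Proof. intros; apply zs_nonneg; auto. Qed.

Lemma sumZ_nonneg u : nneg u -> exZ u -> 0 <= sumZ u.
Proof. intros Hu E. eapply Rle_trans; [apply (PZ_nonneg u 0 Hu)|apply Z2; auto]. Qed.

Lemma zs_le_PZ u a n : nneg u -> exists N, zs u a n <= PZ u N.
Proof.
  intros Hu. exists (Z.to_nat (Z.abs a + Z.of_nat n)). unfold PZ. apply zs_sub; auto; lia.
Qed.

Lemma zs_le_sumZ u a n : nneg u -> exZ u -> zs u a n <= sumZ u.
Proof. intros Hu E. destruct (zs_le_PZ u a n Hu) as [N HN]. eapply Rle_trans; [apply HN|apply Z2; auto]. Qed.

Lemma sumZ_ext u v : (forall j, u j = v j) -> sumZ u = sumZ v.
Proof. intros H; unfold sumZ; f_equal; apply Series_ext; auto. Qed.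

Lemma exZ_ext u v : (forall j, u j = v j) -> exZ u -> exZ v.
Proof. intros H [E1 E2]; split; [apply (ex_series_ext (fun n => u (Z.of_nat n)))|apply (ex_series_ext (fun n => u (- Z.of_nat (S n))%Z))]; auto. Qed.

Lemma Zcomp u v : nneg u -> (forall j, u j <= v j) -> exZ v -> exZ u /\ sumZ u <= sumZ v.
Proof.
  intros Hu Huv E. apply Z1; auto. intros N. eapply Rle_trans; [apply zs_mono; apply Huv|].
  apply Z2; auto. intros j; eapply Rle_trans; [apply Hu|apply Huv].
Qed.

Lemma Zrefl_le u k : nneg u -> exZ u -> exZ (fun j => u (k - j)%Z) /\ sumZ (fun j => u (k - j)%Z) <= sumZ u.
Proof.
  intros Hu E. apply Z1. intros j; apply Hu. intros N. unfold PZ. rewrite zs_refl. apply zs_le_sumZ; auto.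
Qed.

Lemma Zrefl u k : nneg u -> exZ u -> exZ (fun j => u (k - j)%Z) /\ sumZ (fun j => u (k - j)%Z) = sumZ u.
Proof.
  intros Hu E. destruct (Zrefl_le u k Hu E) as [E' H']. split; auto.
  destruct (Zrefl_le (fun j => u (k - j)%Z) k (fun j => Hu _) E') as [_ H''].
  rewrite (sumZ_ext _ u) in H''. lra. intros; f_equal; lia.
Qed.

Lemma exZ_plus u v : exZ u -> exZ v -> exZ (fun j => u j + v j).
Proof.
  intros [A1 A2] [B1 B2]; split.
  apply (ex_series_plus _ _ A1 B1). apply (ex_series_plus _ _ A2 B2).
Qed.

Lemma sumZ_plus u v : exZ u -> exZ v -> sumZ (fun j => u j + v j) = sumZ u + sumZ v.
Proof.
  intros [A1 A2] [B1 B2]; unfold sumZ.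
  rewrite (Series_plus _ _ A1 B1), (Series_plus _ _ A2 B2). ring.
Qed.

Lemma exZ_scal c u : exZ u -> exZ (fun j => c * u j).
Proof. intros [A1 A2]; split.
  apply (ex_series_ext (fun n => u (Z.of_nat n) * c)); [intros; simpl; ring| apply ex_series_scal_r; auto].
  apply (ex_series_ext (fun n => u (- Z.of_nat (S n))%Z * c)); [intros; simpl; ring| apply ex_series_scal_r; auto].
Qed.

Lemma sumZ_scal c u : sumZ (fun j => c * u j) = c * sumZ u.
Proof. unfold sumZ. rewrite !Series_scal_l. ring. Qed.

Lemma exZ_minus u v : exZ u -> exZ v -> exZ (fun j => u j - v j).
Proof.
  intros A B. apply (exZ_ext (fun j => u j + (-1) * v j)). intros; ring.
  apply exZ_plus; auto. apply exZ_scal; auto.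
Qed.

Lemma sumZ_minus u v : exZ u -> exZ v -> sumZ (fun j => u j - v j) = sumZ u - sumZ v.
Proof.
  intros A B. rewrite (sumZ_ext _ (fun j => u j + (-1) * v j)). 2: intros; ring.
  rewrite sumZ_plus; auto. rewrite sumZ_scal; ring. apply exZ_scal; auto.
Qed.

Lemma exZ_abs u : exZ (fun j => Rabs (u j)) -> exZ u.
Proof. intros [A1 A2]; split; apply ex_series_Rabs; auto. Qed.

Lemma sumZ_abs u : exZ (fun j => Rabs (u j)) -> Rabs (sumZ u) <= sumZ (fun j => Rabs (u j)).
Proof.
  intros [A1 A2]; unfold sumZ.
  pose proof (Series_Rabs _ A1). pose proof (Series_Rabs _ A2).
  pose proof (Rabs_triang (Series (fun n => u (Z.of_nat n))) (Series (fun n => u (- Z.of_nat (S n))%Z))). lra.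
Qed.

Lemma Zcomp_abs u v : (forall j, Rabs (u j) <= v j) -> exZ v -> exZ u /\ Rabs (sumZ u) <= sumZ v.
Proof.
  intros H E. destruct (Zcomp (fun j => Rabs (u j)) v) as [E1 H1]; auto.
  intros j; apply Rabs_pos.
  split. apply exZ_abs; auto. eapply Rle_trans; [apply sumZ_abs; auto|auto].
Qed.

Lemma Zrefl_abs u k : exZ (fun j => Rabs (u j)) -> sumZ (fun j => u (k - j)%Z) = sumZ u.
Proof.
  intros E.
  set (p := fun j => (Rabs (u j) + u j) / 2). set (m := fun j => (Rabs (u j) - u j) / 2).
  assert (Hp : nneg p) by (intros j; unfold p; split_Rabs; lra).
  assert (Hm : nneg m) by (intros j; unfold m; split_Rabs; lra).
  assert (Ep : exZ p) by (apply (Zcomp p (fun j => Rabs (u j))); auto; intros j; unfold p; split_Rabs; lra).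
  assert (Em : exZ m) by (apply (Zcomp m (fun j => Rabs (u j))); auto; intros j; unfold m; split_Rabs; lra).
  destruct (Zrefl p k Hp Ep) as [Ep' Hp']. destruct (Zrefl m k Hm Em) as [Em' Hm'].
  rewrite (sumZ_ext u (fun j => p j - m j)) by (intros; unfold p, m; field).
  rewrite (sumZ_ext (fun j => u (k - j)%Z) (fun j => p (k - j)%Z - m (k - j)%Z)) by (intros; unfold p, m; field).
  rewrite !sumZ_minus; auto. rewrite Hp', Hm'; auto.
Qed.

Lemma zs_zero a n : zs (fun _ => 0) a n = 0.
Proof. induction n; simpl; auto. rewrite IHn; ring. Qed.

Lemma exZ_0 : exZ (fun _ => 0).
Proof. apply (Z1 _ 0). intros j; lra. intros N; unfold PZ; rewrite zs_zero; lra. Qed.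

Lemma zs_sumZ (F : Z -> Z -> R) a n : (forall k, exZ (F k)) ->
  exZ (fun j => zs (fun k => F k j) a n) /\ sumZ (fun j => zs (fun k => F k j) a n) = zs (fun k => sumZ (F k)) a n.
Proof.
  intros H. induction n.
  - simpl. split. apply (exZ_ext (fun _ => 0)); auto. apply exZ_0.
    rewrite (sumZ_ext _ (fun j => 0 * 0)) by (intros; ring). rewrite sumZ_scal. ring.
  - destruct IHn as [E S]. simpl. split.
    apply exZ_plus; auto. rewrite sumZ_plus; auto. rewrite S; auto.
Qed.

Lemma CS_core A B C : 0 <= A -> 0 <= C -> 0 <= C * (A * C - B ^ 2) -> 0 <= A * (A * C - B ^ 2) ->
  2 * B <= A + C -> - (2 * B) <= A + C -> B ^ 2 <= A * C.
Proof.
  intros HA HC H1 H2 H3 H4.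
  destruct (Rle_lt_or_eq_dec 0 C HC) as [Cp|C0].
  - apply Rmult_le_reg_l with C; auto. nra.
  - destruct (Rle_lt_or_eq_dec 0 A HA) as [Ap|A0].
    + apply Rmult_le_reg_l with A; auto. nra.
    + subst. assert (B = 0) by lra. subst; nra.
Qed.

Lemma zs_CS (x y : Z -> R) a n :
  (zs (fun j => x j * y j) a n) ^ 2 <= zs (fun j => x j ^ 2) a n * zs (fun j => y j ^ 2) a n.
Proof.
  assert (E : forall P Q, zs (fun j => (P * x j - Q * y j) ^ 2) a n = P^2 * zs (fun j => x j ^ 2) a n + ((-2*P*Q) * zs (fun j => x j * y j) a n + Q^2 * zs (fun j => y j ^ 2) a n)).
  { intros. rewrite (zs_ext _ (fun j => P^2 * x j^2 + ((-2*P*Q)*(x j*y j) + Q^2 * y j^2))) by (intros; ring). rewrite !zs_plus, !zs_scal. ring. }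
  assert (N : forall P Q, 0 <= zs (fun j => (P * x j - Q * y j) ^ 2) a n) by (intros; apply zs_nonneg; intros; apply pow2_ge_0).
  assert (H3 : 2 * zs (fun j => x j * y j) a n <= zs (fun j => x j ^ 2) a n + zs (fun j => y j ^ 2) a n).
  { rewrite <- zs_plus, <- zs_scal. apply zs_mono; intros j; pose proof (pow2_ge_0 (x j - y j)); pose proof (pow2_ge_0 (x j + y j)); nra. }
  assert (H4 : - (2 * zs (fun j => x j * y j) a n) <= zs (fun j => x j ^ 2) a n + zs (fun j => y j ^ 2) a n).
  { replace (- (2 * zs (fun j : Z => x j * y j) a n)) with ((-2) * zs (fun j : Z => x j * y j) a n) by ring.
    rewrite <- zs_plus, <- zs_scal. apply zs_mono; intros j; pose proof (pow2_ge_0 (x j - y j)); pose proof (pow2_ge_0 (x j + y j)); nra. }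
  pose proof (N (zs (fun j => y j ^ 2) a n) (zs (fun j => x j * y j) a n)) as N1. rewrite E in N1.
  pose proof (N (zs (fun j => x j * y j) a n) (zs (fun j => x j ^ 2) a n)) as N2. rewrite E in N2.
  assert (HA : 0 <= zs (fun j => x j ^ 2) a n) by (apply zs_nonneg; intros; apply pow2_ge_0).
  assert (HC : 0 <= zs (fun j => y j ^ 2) a n) by (apply zs_nonneg; intros; apply pow2_ge_0).
  revert N1 N2 H3 H4 HA HC.
  generalize (zs (fun j => x j ^ 2) a n) (zs (fun j => x j * y j) a n) (zs (fun j => y j ^ 2) a n).
  intros A B C N1 N2 H3 H4 HA HC. apply CS_core; auto.
  replace (C * (A * C - B ^ 2)) with (C ^ 2 * A + (-2 * C * B * B + B ^ 2 * C)) by ring; auto.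
  replace (A * (A * C - B ^ 2)) with (B ^ 2 * A + (-2 * B * A * B + A ^ 2 * C)) by ring; auto.
Qed.

Lemma sqrt_mult_le (A C B : R) : 0 <= A -> 0 <= C -> 0 <= B -> B ^ 2 <= A * C -> B <= sqrt A * sqrt C.
Proof.
  intros HA HC HB H. rewrite <- sqrt_mult; auto. rewrite <- (sqrt_pow2 B HB). apply sqrt_le_1; auto. nra.
  apply Rmult_le_pos; auto.
Qed.

Lemma CS (x y : Z -> R) : nneg x -> nneg y -> exZ (fun j => x j ^ 2) -> exZ (fun j => y j ^ 2) ->
  exZ (fun j => x j * y j) /\ sumZ (fun j => x j * y j) <= sqrt (sumZ (fun j => x j ^ 2)) * sqrt (sumZ (fun j => y j ^ 2)).
Proof.
  intros Hx Hy Ex Ey. apply Z1. intros j; apply Rmult_le_pos; auto.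
  intros N. unfold PZ. apply sqrt_mult_le.
  apply sumZ_nonneg; auto; intros j; nra. apply sumZ_nonneg; auto; intros j; nra.
  apply zs_nonneg; intros j; apply Rmult_le_pos; auto.
  eapply Rle_trans; [apply zs_CS|]. apply Rmult_le_compat.
  apply zs_nonneg; intros; nra. apply zs_nonneg; intros; nra.
  apply zs_le_sumZ; auto; intros j; nra. apply zs_le_sumZ; auto; intros j; nra.
Qed.

Definition N2 (x : Z -> R) := sqrt (sumZ (fun j => x j ^ 2)).
Definition Lsq (x : Z -> R) := exZ (fun j => x j ^ 2).

Lemma N2_nonneg x : 0 <= N2 x.
Proof. apply sqrt_pos. Qed.

Lemma Mink (x y : Z -> R) : nneg x -> nneg y -> Lsq x -> Lsq y ->
  Lsq (fun j => x j + y j) /\ N2 (fun j => x j + y j) <= N2 x + N2 y.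
Proof.
  intros Hx Hy Ex Ey. destruct (CS x y Hx Hy Ex Ey) as [Exy Sxy].
  assert (E : Lsq (fun j => x j + y j)).
  { unfold Lsq. apply (exZ_ext (fun j => x j ^ 2 + (2 * (x j * y j) + y j ^ 2))). intros; ring.
    apply exZ_plus; auto. apply exZ_plus; auto. apply exZ_scal; auto. }
  split; auto. unfold N2.
  rewrite (sumZ_ext _ (fun j => x j ^ 2 + (2 * (x j * y j) + y j ^ 2))) by (intros; ring).
  rewrite sumZ_plus, sumZ_plus, sumZ_scal; auto. 2: apply exZ_scal; auto. 2: apply exZ_plus; auto; apply exZ_scal; auto.
  assert (P1: 0 <= sumZ (fun j => x j ^ 2)) by (apply sumZ_nonneg; auto; intros j; nra).
  assert (P2: 0 <= sumZ (fun j => y j ^ 2)) by (apply sumZ_nonneg; auto; intros j; nra).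
  rewrite <- (sqrt_pow2 (sqrt (sumZ (fun j => x j ^ 2)) + sqrt (sumZ (fun j => y j ^ 2)))).
  2: pose proof (sqrt_pos (sumZ (fun j => x j ^ 2))); pose proof (sqrt_pos (sumZ (fun j => y j ^ 2))); lra.
  apply sqrt_le_1_alt.
  replace ((sqrt (sumZ (fun j => x j ^ 2)) + sqrt (sumZ (fun j => y j ^ 2))) ^ 2) with
    (sqrt (sumZ (fun j => x j ^ 2)) ^ 2 + 2 * (sqrt (sumZ (fun j => x j ^ 2)) * sqrt (sumZ (fun j => y j ^ 2))) + sqrt (sumZ (fun j => y j ^ 2)) ^ 2) by ring.
  rewrite !pow2_sqrt; auto. lra.
Qed.

Lemma N2_dom (x z : Z -> R) : nneg z -> (forall j, z j <= x j) -> Lsq x -> Lsq z /\ N2 z <= N2 x.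
Proof.
  intros Hz H E. destruct (Zcomp (fun j => z j ^ 2) (fun j => x j ^ 2)) as [E' S'].
  intros j; nra. intros j; specialize (Hz j); specialize (H j); nra. auto.
  split; auto. apply sqrt_le_1_alt; auto.
Qed.

Lemma N2_scal (c : R) x : 0 <= c -> Lsq x -> Lsq (fun j => c * x j) /\ N2 (fun j => c * x j) = c * N2 x.
Proof.
  intros Hc E. split. unfold Lsq. apply (exZ_ext (fun j => c^2 * x j ^ 2)); [intros; ring|apply exZ_scal; auto].
  unfold N2. rewrite (sumZ_ext _ (fun j => c^2 * x j ^ 2)) by (intros; ring). rewrite sumZ_scal.
  rewrite sqrt_mult_alt. rewrite sqrt_pow2; auto. nra.
Qed.

Lemma N2_refl x k : Lsq x -> Lsq (fun j => x (k - j)%Z) /\ N2 (fun j => x (k - j)%Z) = N2 x.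
Proof.
  intros E. destruct (Zrefl (fun j => x j ^ 2) k) as [E' S']; auto. intros j; nra.
  split; auto. unfold N2; rewrite S'; auto.
Qed.

Lemma Cmod_fst (z : C) : Rabs (fst z) <= Cmod z.
Proof. pose proof (Rmax_Cmod z). pose proof (Rmax_l (Rabs (fst z)) (Rabs (snd z))). lra. Qed.
Lemma Cmod_snd (z : C) : Rabs (snd z) <= Cmod z.
Proof. pose proof (Rmax_Cmod z). pose proof (Rmax_r (Rabs (fst z)) (Rabs (snd z))). lra. Qed.
Lemma Cmod_le_sum (z : C) : Cmod z <= Rabs (fst z) + Rabs (snd z).
Proof.
  unfold Cmod. rewrite <- (sqrt_pow2 (Rabs (fst z) + Rabs (snd z))).
  apply sqrt_le_1_alt. pose proof (Rabs_pos (fst z)). pose proof (Rabs_pos (snd z)).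
  rewrite <- (pow2_abs (fst z)), <- (pow2_abs (snd z)). nra.
  pose proof (Rabs_pos (fst z)). pose proof (Rabs_pos (snd z)). lra.
Qed.

Definition exC (u : Z -> C) := exZ (fun j => Cmod (u j)).

Lemma exC_fst u : exC u -> exZ (fun j => Rabs (fst (u j))).
Proof. intros E. apply (Zcomp _ (fun j => Cmod (u j))); auto. intros j; apply Rabs_pos. intros; apply Cmod_fst. Qed.
Lemma exC_snd u : exC u -> exZ (fun j => Rabs (snd (u j))).
Proof. intros E. apply (Zcomp _ (fun j => Cmod (u j))); auto. intros j; apply Rabs_pos. intros; apply Cmod_snd. Qed.

Lemma sumZC_bound u : exC u -> Cmod (sumZC u) <= 2 * sumZ (fun j => Cmod (u j)).
Proof.
  intros E. eapply Rle_trans; [apply Cmod_le_sum|]. unfold sumZC; simpl.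
  destruct (Zcomp_abs (fun j => fst (u j)) (fun j => Cmod (u j))) as [_ H1]; auto. intros; apply Cmod_fst.
  destruct (Zcomp_abs (fun j => snd (u j)) (fun j => Cmod (u j))) as [_ H2]; auto. intros; apply Cmod_snd.
  lra.
Qed.

Lemma exC_comp u (v : Z -> R) : (forall j, Cmod (u j) <= v j) -> exZ v -> exC u.
Proof. intros H E. apply (Zcomp _ v); auto. intros j; apply Cmod_ge_0. Qed.

Lemma exC_plus u v : exC u -> exC v -> exC (fun j => Cplus (u j) (v j)).
Proof.
  intros A B. apply (exC_comp _ (fun j => Cmod (u j) + Cmod (v j))). intros; apply Cmod_triangle.
  apply exZ_plus; auto.
Qed.

Lemma exC_scal c u : exC u -> exC (fun j => Cmult c (u j)).
Proof.
  intros A. apply (exC_comp _ (fun j => Cmod c * Cmod (u j))). intros; rewrite Cmod_mult; lra.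
  apply exZ_scal; auto.
Qed.

Lemma sumZC_plus u v : exC u -> exC v -> sumZC (fun j => Cplus (u j) (v j)) = Cplus (sumZC u) (sumZC v).
Proof.
  intros A B.
  assert (F1: exZ (fun j => fst (u j))) by (apply exZ_abs, exC_fst; auto).
  assert (S1: exZ (fun j => snd (u j))) by (apply exZ_abs, exC_snd; auto).
  assert (F2: exZ (fun j => fst (v j))) by (apply exZ_abs, exC_fst; auto).
  assert (S2: exZ (fun j => snd (v j))) by (apply exZ_abs, exC_snd; auto).
  unfold sumZC. simpl.
  rewrite (sumZ_plus (fun j => fst (u j)) (fun j => fst (v j))), (sumZ_plus (fun j => snd (u j)) (fun j => snd (v j))); auto.
Qed.

Lemma sumZC_scal c u : exC u -> sumZC (fun j => Cmult c (u j)) = Cmult c (sumZC u).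
Proof.
  intros A. unfold sumZC. simpl.
  assert (F: exZ (fun j => fst (u j))) by (apply exZ_abs, exC_fst; auto).
  assert (S: exZ (fun j => snd (u j))) by (apply exZ_abs, exC_snd; auto).
  rewrite (sumZ_minus (fun k => fst c * fst (u k))), (sumZ_plus (fun k => fst c * snd (u k))), !sumZ_scal; try apply exZ_scal; auto.
Qed.

Lemma sumZC_ext u v : (forall j, u j = v j) -> sumZC u = sumZC v.
Proof. intros H. unfold sumZC. rewrite (sumZ_ext (fun k => fst (u k)) (fun k => fst (v k))), (sumZ_ext (fun k => snd (u k)) (fun k => snd (v k))); auto; intros; rewrite H; auto. Qed.

Lemma exC_ext u v : (forall j, u j = v j) -> exC u -> exC v.
Proof. intros H E. apply (exZ_ext (fun j => Cmod (u j))); auto. intros; rewrite H; auto. Qed.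

Lemma exC_minus u v : exC u -> exC v -> exC (fun j => Cminus (u j) (v j)).
Proof.
  intros A B. apply (exC_ext (fun j => Cplus (u j) (Cmult (RtoC (-1)) (v j)))). intros; ring.
  apply exC_plus; auto. apply exC_scal; auto.
Qed.

Lemma sumZC_minus u v : exC u -> exC v -> sumZC (fun j => Cminus (u j) (v j)) = Cminus (sumZC u) (sumZC v).
Proof.
  intros A B. rewrite (sumZC_ext _ (fun j => Cplus (u j) (Cmult (RtoC (-1)) (v j)))) by (intros; ring).
  rewrite sumZC_plus, sumZC_scal; auto. ring. apply exC_scal; auto.
Qed.

Lemma sumZC_refl u k : exC u -> sumZC (fun j => u (k - j)%Z) = sumZC u.
Proof.
  intros A. unfold sumZC.
  rewrite (Zrefl_abs (fun j => fst (u j))), (Zrefl_abs (fun j => snd (u j))); auto.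
  apply exC_snd; auto. apply exC_fst; auto.
Qed.

Lemma exC_refl u k : exC u -> exC (fun j => u (k - j)%Z).
Proof. intros A. destruct (Zrefl (fun j => Cmod (u j)) k); auto. intros j; apply Cmod_ge_0. Qed.

Lemma Rpower_pos x s : 0 < Rpower x s.
Proof. unfold Rpower; apply exp_pos. Qed.

Lemma Rpower_half x : 0 < x -> Rpower x (1/2) = sqrt x.
Proof. intros; replace (1/2) with (/2) by field; apply Rpower_sqrt; auto. Qed.

Lemma Rpower_ge_sqrt x s : 1 <= x -> 1/2 <= s -> sqrt x <= Rpower x s.
Proof. intros Hx Hs. rewrite <- Rpower_half by lra. apply Rle_Rpower; auto. Qed.

Lemma Rpower_mono x y s : 0 <= s -> 0 < x <= y -> Rpower x s <= Rpower y s.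
Proof. intros; apply Rle_Rpower_l; auto. Qed.

Lemma Rpower_exp_mono x s t : 1 <= x -> s <= t -> Rpower x s <= Rpower x t.
Proof. intros; apply Rle_Rpower; auto. Qed.

Lemma Rpower_mul4 x s : 0 < x -> Rpower (4 * x) s = Rpower 4 s * Rpower x s.
Proof. intros; rewrite Rpower_mult_distr; auto; lra. Qed.

Lemma Rpower_ge1 x s : 1 <= x -> 0 <= s -> 1 <= Rpower x s.
Proof. intros. rewrite <- (Rpower_O x) by lra. apply Rle_Rpower; auto. Qed.

Definition alpha (m : R) := / sqrt (1 + m ^ 2).

Lemma PW0 (s jj ll kk : R) : 1/2 <= s -> kk = jj + ll -> 1 <= kk ^ 2 -> ll ^ 2 <= jj ^ 2 ->
  Rpower (1 + kk^2) s * (1 + (jj^2 + ll^2) / kk^2) <=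
  (21 * Rpower 4 s + 16) * (alpha ll + alpha jj + alpha kk) * (Rpower (1 + jj^2) s * Rpower (1 + ll^2) s).
Proof.
  intros Hs Hk Hk1 Hlj.
  set (J := 1 + jj^2). set (L := 1 + ll^2). set (K := 1 + kk^2).
  assert (HJ : 1 <= J) by (unfold J; nra). assert (HL : 1 <= L) by (unfold L; nra). assert (HK : 1 <= K) by (unfold K; nra).
  assert (KJ : K <= 4 * J). { unfold K, J. subst kk. pose proof (pow2_ge_0 (jj - ll)). pose proof (pow2_ge_0 (jj + ll)). nra. }
  assert (JKL : J <= 2 * K + 2 * L). { unfold K, J, L. subst kk. pose proof (pow2_ge_0 (jj + 2*ll)). nra. }
  assert (W : (jj^2 + ll^2) / kk^2 <= 4 * J / K).
  { unfold Rdiv. apply Rle_trans with (2 * J * / kk^2).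
    apply Rmult_le_compat_r. apply Rlt_le, Rinv_0_lt_compat; lra. unfold J; lra.
    rewrite Rmult_assoc, (Rmult_assoc 4). replace 4 with (2*2) by ring. rewrite Rmult_assoc.
    apply Rmult_le_compat_l. lra. rewrite <- Rmult_assoc, (Rmult_comm 2 J), Rmult_assoc.
    apply Rmult_le_compat_l. lra. apply Rmult_le_reg_l with (kk^2). lra.
    rewrite Rinv_r by lra. apply Rmult_le_reg_l with K. lra.
    replace (K * (kk ^ 2 * (2 * / K))) with (2 * kk^2) by (field; lra). unfold K; lra. }
  set (PJ := Rpower J s). set (PL := Rpower L s). set (PK := Rpower K s).
  assert (PJp : 0 < PJ) by apply Rpower_pos. assert (PLp : 0 < PL) by apply Rpower_pos.
  assert (PKp : 0 < PK) by apply Rpower_pos.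
  assert (c4 : 1 <= Rpower 4 s) by (apply Rpower_ge1; lra).
  assert (sqL : sqrt L <= PL) by (apply Rpower_ge_sqrt; auto).
  assert (sqK0 : 1 <= sqrt K) by (rewrite <- sqrt_1; apply sqrt_le_1_alt; auto).
  assert (sqL0 : 1 <= sqrt L) by (rewrite <- sqrt_1; apply sqrt_le_1_alt; auto).
  assert (sqJ0 : 1 <= sqrt J) by (rewrite <- sqrt_1; apply sqrt_le_1_alt; auto).
  assert (aL : alpha ll = / sqrt L) by reflexivity.
  assert (aJ : alpha jj = / sqrt J) by reflexivity.
  assert (aK : alpha kk = / sqrt K) by reflexivity.
  assert (aJp : 0 < alpha jj) by (rewrite aJ; apply Rinv_0_lt_compat; lra).
  assert (T1 : PK <= Rpower 4 s * PJ).
  { unfold PK, PJ. rewrite <- Rpower_mul4 by lra. apply Rpower_mono; lra. }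
  assert (A1 : PJ <= alpha ll * (PJ * PL)).
  { rewrite aL. apply Rmult_le_reg_l with (sqrt L). lra.
    replace (sqrt L * (/ sqrt L * (PJ * PL))) with (PJ * PL) by (field; lra). nra. }
  assert (T2 : 4 * PK * J / K <= (20 * Rpower 4 s + 16) * (alpha ll + alpha kk) * (PJ * PL)).
  { destruct (Rle_lt_dec L K) as [LK|LK].
    - assert (J <= 4 * K) by lra.
      apply Rle_trans with (16 * PK).
      { apply Rmult_le_reg_r with K. lra. unfold Rdiv. rewrite Rmult_assoc, Rinv_l, Rmult_1_r by lra. nra. }
      assert (0 <= alpha kk * (PJ * PL)) by (rewrite aK; apply Rmult_le_pos; [apply Rlt_le, Rinv_0_lt_compat; lra| nra]).
      nra.
    - assert (J <= 4 * L) by lra.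
      assert (B : PK * J <= (4 + Rpower 4 s) * sqrt K * (PJ * PL)).
      { destruct (Rle_lt_dec s 1) as [s1|s1].
        - assert (E1 : PK = sqrt K * Rpower K (s - 1/2)).
          { unfold PK. rewrite <- Rpower_half by lra. rewrite <- Rpower_plus. f_equal; ring. }
          assert (E2 : J = PJ * Rpower J (1 - s)).
          { unfold PJ. rewrite <- Rpower_plus. replace (s + (1 - s)) with 1 by ring. rewrite Rpower_1; lra. }
          assert (E3 : Rpower K (s - 1/2) * Rpower L (1 - s) <= PL).
          { apply Rle_trans with (Rpower L (s - 1/2) * Rpower L (1 - s)).
            apply Rmult_le_compat_r. apply Rlt_le, Rpower_pos. apply Rpower_mono; lra.
            rewrite <- Rpower_plus. apply Rpower_exp_mono; lra. }
          assert (E4 : Rpower J (1 - s) <= 4 * Rpower L (1 - s)).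
          { apply Rle_trans with (Rpower (4 * L) (1 - s)). apply Rpower_mono; lra.
            rewrite Rpower_mul4 by lra. apply Rmult_le_compat_r. apply Rlt_le, Rpower_pos.
            rewrite <- (Rpower_1 4) at 2 by lra. apply Rpower_exp_mono; lra. }
          rewrite E1. pattern J at 1; rewrite E2.
          pose proof (Rpower_pos K (s - 1/2)). pose proof (Rpower_pos J (1 - s)). pose proof (Rpower_pos L (1 - s)).
          assert (0 <= sqrt K) by apply sqrt_pos.
          apply Rle_trans with (sqrt K * PJ * (Rpower K (s - 1/2) * (4 * Rpower L (1 - s)))).
          { replace (sqrt K * Rpower K (s - 1 / 2) * (PJ * Rpower J (1 - s))) with (sqrt K * PJ * (Rpower K (s - 1/2) * Rpower J (1 - s))) by ring.
            apply Rmult_le_compat_l. nra. apply Rmult_le_compat_l; lra. }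
          replace (sqrt K * PJ * (Rpower K (s - 1 / 2) * (4 * Rpower L (1 - s)))) with (4 * sqrt K * PJ * (Rpower K (s - 1/2) * Rpower L (1 - s))) by ring.
          apply Rle_trans with (4 * sqrt K * PJ * PL).
          apply Rmult_le_compat_l. nra. auto.
          assert (0 < Rpower 4 s) by apply Rpower_pos.
          assert (0 <= Rpower 4 s * (sqrt K * (PJ * PL))) by (apply Rmult_le_pos; [lra| apply Rmult_le_pos; nra]). lra.
        - assert (E1 : PK = K * Rpower K (s - 1)).
          { unfold PK. rewrite <- (Rpower_1 K) at 2 by lra. rewrite <- Rpower_plus. f_equal; ring. }
          assert (E2 : J * Rpower J (s - 1) = PJ).
          { unfold PJ. rewrite <- (Rpower_1 J) at 1 by lra. rewrite <- Rpower_plus. f_equal; ring. }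
          assert (E3 : Rpower K (s - 1) <= Rpower 4 (s - 1) * Rpower J (s - 1)).
          { rewrite <- Rpower_mul4 by lra. apply Rpower_mono; lra. }
          assert (E4 : Rpower 4 (s - 1) <= 4 * Rpower 4 s / 4).
          { replace (4 * Rpower 4 s / 4) with (Rpower 4 s) by field. apply Rpower_exp_mono; lra. }
          assert (sqKL : sqrt K <= PL). { apply Rle_trans with (sqrt L); auto. apply sqrt_le_1_alt; lra. }
          assert (sqKK : K = sqrt K * sqrt K) by (rewrite sqrt_sqrt; lra).
          rewrite E1.
          pose proof (Rpower_pos J (s - 1)). pose proof (Rpower_pos 4 (s - 1)). pose proof (Rpower_pos K (s - 1)).
          apply Rle_trans with (K * (Rpower 4 (s - 1) * Rpower J (s - 1)) * J).
          { apply Rmult_le_compat_r. lra. apply Rmult_le_compat_l; lra. }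
          replace (K * (Rpower 4 (s - 1) * Rpower J (s - 1)) * J) with (K * Rpower 4 (s - 1) * (J * Rpower J (s - 1))) by ring.
          rewrite E2.
          rewrite sqKK at 1.
          apply Rle_trans with (sqrt K * PL * Rpower 4 s * PJ).
          { replace (sqrt K * sqrt K * Rpower 4 (s - 1) * PJ) with (sqrt K * sqrt K * (Rpower 4 (s - 1) * PJ)) by ring.
            replace (sqrt K * PL * Rpower 4 s * PJ) with (sqrt K * PL * (Rpower 4 s * PJ)) by ring.
            assert (0 <= sqrt K) by apply sqrt_pos.
            apply Rmult_le_compat; try nra. }
          assert (0 <= sqrt K) by apply sqrt_pos.
          assert (0 <= sqrt K * (PJ * PL)) by (apply Rmult_le_pos; nra). lra.
      }
      assert (Kp : 0 < sqrt K) by lra.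
      assert (sqKK' : K = sqrt K * sqrt K) by (rewrite sqrt_sqrt; lra).
      unfold Rdiv. rewrite aK.
      apply Rle_trans with (4 * (4 + Rpower 4 s) * (PJ * PL) * / sqrt K).
      { rewrite sqKK' at 1. rewrite Rinv_mult.
        apply Rmult_le_reg_r with (sqrt K * sqrt K). nra.
        replace (4 * PK * J * (/ sqrt K * / sqrt K) * (sqrt K * sqrt K)) with (4 * (PK * J)) by (field; lra).
        replace (4 * (4 + Rpower 4 s) * (PJ * PL) * / sqrt K * (sqrt K * sqrt K)) with (4 * ((4 + Rpower 4 s) * sqrt K * (PJ * PL))) by (field; lra).
        lra. }
      assert (0 <= / sqrt L * (PJ * PL)). { apply Rmult_le_pos. apply Rlt_le, Rinv_0_lt_compat; lra. nra. }
      assert (0 <= / sqrt K * (PJ * PL)). { apply Rmult_le_pos. apply Rlt_le, Rinv_0_lt_compat; lra. nra. }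
      assert (0 < Rpower 4 s) by apply Rpower_pos.
      nra.
  }

  assert (0 <= alpha kk * (PJ * PL)). { rewrite aK; apply Rmult_le_pos. apply Rlt_le, Rinv_0_lt_compat; lra. nra. }
  assert (aLp : 0 < alpha ll) by (rewrite aL; apply Rinv_0_lt_compat; lra).
  assert (aKp : 0 < alpha kk) by (rewrite aK; apply Rinv_0_lt_compat; lra).
  assert (Xp : 0 < PJ * PL) by nra.
  assert (LHS : PK * (1 + (jj ^ 2 + ll ^ 2) / kk ^ 2) <= PK + 4 * PK * J / K).
  { assert (4 * PK * J / K = PK * (4 * J / K)) by (field; lra). nra. }
  assert (T1' : PK <= Rpower 4 s * (alpha ll * (PJ * PL))).
  { eapply Rle_trans; [apply T1|]. apply Rmult_le_compat_l; lra. }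
  assert (P1 : 0 <= Rpower 4 s * (alpha jj * (PJ * PL))) by (apply Rmult_le_pos; [lra|apply Rmult_le_pos; lra]).
  assert (P2 : 0 <= Rpower 4 s * (alpha kk * (PJ * PL))) by (apply Rmult_le_pos; [lra|apply Rmult_le_pos; lra]).
  assert (P3 : 0 <= alpha jj * (PJ * PL)) by (apply Rmult_le_pos; lra).
  assert (P4 : 0 <= alpha kk * (PJ * PL)) by (apply Rmult_le_pos; lra).
  assert (P5 : 0 <= Rpower 4 s * (alpha ll * (PJ * PL))) by (apply Rmult_le_pos; [lra|apply Rmult_le_pos; lra]).
  fold J L K PJ PL PK. 
  assert (R : (21 * Rpower 4 s + 16) * (alpha ll + alpha jj + alpha kk) * (PJ * PL) =
     21 * (Rpower 4 s * (alpha ll * (PJ * PL))) + 21 * (Rpower 4 s * (alpha jj * (PJ * PL))) + 21 * (Rpower 4 s * (alpha kk * (PJ * PL)))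
     + 16 * (alpha ll * (PJ * PL)) + 16 * (alpha jj * (PJ * PL)) + 16 * (alpha kk * (PJ * PL))) by ring.
  assert (R2 : (20 * Rpower 4 s + 16) * (alpha ll + alpha kk) * (PJ * PL) =
     20 * (Rpower 4 s * (alpha ll * (PJ * PL))) + 20 * (Rpower 4 s * (alpha kk * (PJ * PL)))
     + 16 * (alpha ll * (PJ * PL)) + 16 * (alpha kk * (PJ * PL))) by ring.
  rewrite R. rewrite R2 in T2. lra.
Qed.

Definition Cp (r : R) := 21 * Rpower 4 (r/2) + 16.
Definition rho (r : R) (m : Z) := Rpower (1 + IZR m ^ 2) (r/2).
Definition Wt (k j : Z) := 1 + (IZR j ^ 2 + IZR (k - j) ^ 2) / IZR k ^ 2.
Definition al (m : Z) := alpha (IZR m).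

Lemma IZR_sq_ge1 k : k <> 0%Z -> 1 <= IZR k ^ 2.
Proof.
  intros Hk. destruct (Z_lt_le_dec 0 k) as [H|H].
  - assert (1 <= IZR k) by (apply IZR_le; lia). nra.
  - assert (IZR k <= -1) by (apply IZR_le; lia). nra.
Qed.

Lemma PW r k j : 1 <= r -> k <> 0%Z ->
  rho r k * Wt k j <= Cp r * (al (k - j) + al j + al k) * (rho r j * rho r (k - j)).
Proof.
  intros Hr Hk. unfold rho, Wt, al, Cp. pose proof (IZR_sq_ge1 k Hk).
  assert (Ek : IZR k = IZR j + IZR (k - j)) by (rewrite minus_IZR; ring).
  destruct (Rle_lt_dec (IZR (k - j) ^ 2) (IZR j ^ 2)) as [H1|H1].
  - apply PW0; auto; lra.
  - pose proof (PW0 (r/2) (IZR (k - j)) (IZR j) (IZR k) ltac:(lra) ltac:(lra) H ltac:(lra)).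
    replace (IZR j ^ 2 + IZR (k - j) ^ 2) with (IZR (k - j) ^ 2 + IZR j ^ 2) by ring.
    eapply Rle_trans; [apply H0|]. right; ring.
Qed.

Lemma alpha_sq x : alpha x ^ 2 = / (1 + x ^ 2).
Proof.
  unfold alpha. assert (0 < 1 + x^2) by nra. rewrite <- Rinv_pow by (apply Rgt_not_eq, sqrt_lt_R0; lra).
  rewrite pow2_sqrt; lra.
Qed.

Lemma sum_inv_sq N : sum_n (fun n => / (1 + INR n ^ 2)) N <= 3 - 2 / (INR N + 1).
Proof.
  induction N.
  - rewrite sum_O. simpl. replace (1 + 0 * (0 * 1)) with 1 by ring. replace (0 + 1) with 1 by ring. rewrite Rinv_1. lra.
  - rewrite sum_Sn, plusR. rewrite S_INR.
    assert (0 <= INR N) by apply pos_INR.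
    assert (/ (1 + (INR N + 1) ^ 2) <= 2 / (INR N + 1) - 2 / (INR N + 1 + 1)).
    { replace (2 / (INR N + 1) - 2 / (INR N + 1 + 1)) with (/ ((INR N + 1) * (INR N + 2) / 2)) by (field; lra).
      apply Rinv_le_contravar. apply Rmult_lt_0_compat; [|lra]. apply Rmult_lt_0_compat; lra. 
      pose proof (pow2_ge_0 (INR N)). nra. }
    lra.
Qed.

Lemma sum_n_le' (a b : nat -> R) N : (forall n, a n <= b n) -> sum_n a N <= sum_n b N.
Proof. intros H; induction N. rewrite !sum_O; auto. rewrite !sum_Sn, !plusR. apply Rplus_le_compat; auto. Qed.

Lemma Salpha : exZ (fun m => al m ^ 2) /\ sumZ (fun m => al m ^ 2) <= 6.
Proof.
  apply Z1. intros m; apply pow2_ge_0.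
  intros N. rewrite PZ_split. unfold al. 
  rewrite (sum_n_ext _ (fun n => / (1 + INR n ^ 2))).
  2: { intros n. rewrite alpha_sq, <- INR_IZR_INZ. reflexivity. }
  assert (sum_n (fun n => alpha (IZR (- Z.of_nat (S n))) ^ 2) N <= sum_n (fun n => / (1 + INR n ^ 2)) N).
  { apply sum_n_le'. intros n. rewrite alpha_sq, opp_IZR, <- INR_IZR_INZ, S_INR.
    assert (0 <= INR n) by apply pos_INR. apply Rinv_le_contravar. nra. nra. }
  pose proof (sum_inv_sq N). assert (0 < 2 / (INR N + 1)) by (apply Rdiv_lt_0_compat; pose proof (pos_INR N); lra).
  lra.
Qed.

Definition Tb (x y : Z -> R) (k : Z) := if Z.eqb k 0 then 0 else sumZ (fun j => Wt k j * (x j * y (k - j)%Z)).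

Lemma Wt_ge1 k j : k <> 0%Z -> 1 <= Wt k j.
Proof.
  intros Hk. unfold Wt. pose proof (IZR_sq_ge1 k Hk).
  assert (0 <= (IZR j ^ 2 + IZR (k - j) ^ 2) / IZR k ^ 2).
  { apply Rdiv_le_0_compat; [|lra]. pose proof (pow2_ge_0 (IZR j)); pose proof (pow2_ge_0 (IZR (k-j))); lra. }
  lra.
Qed.

Lemma single_le u m : nneg u -> exZ u -> u m <= sumZ u.
Proof. intros H E. pose proof (zs_le_sumZ u m 1 H E). simpl in H0. rewrite Z.add_0_r in H0. lra. Qed.

Lemma zs_shift u j a n : zs (fun k => u (k - j)%Z) a n = zs u (a - j)%Z n.
Proof. induction n; simpl; auto. rewrite IHn. do 2 f_equal. lia. Qed.

Lemma sumZ_sq_N2 X : nneg X -> Lsq X -> sumZ (fun j => X j ^ 2) = N2 X ^ 2.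
Proof. intros H E. unfold N2. rewrite pow2_sqrt; auto. apply sumZ_nonneg; auto. intros j; apply pow2_ge_0. Qed.

Definition Qf (X Y : Z -> R) k := sumZ (fun j => (X j * Y (k - j)%Z) ^ 2).

Lemma Qsum (X Y : Z -> R) : nneg X -> nneg Y -> Lsq X -> Lsq Y ->
  (forall k, exZ (fun j => (X j * Y (k - j)%Z) ^ 2) /\ Qf X Y k <= N2 X ^ 2 * N2 Y ^ 2)
  /\ forall a n, zs (Qf X Y) a n <= N2 X ^ 2 * N2 Y ^ 2.
Proof.
  intros HX HY EX EY.
  assert (Y2 : nneg (fun j => Y j ^ 2)) by (intros j; apply pow2_ge_0).
  assert (X2 : nneg (fun j => X j ^ 2)) by (intros j; apply pow2_ge_0).
  rewrite <- (sumZ_sq_N2 X), <- (sumZ_sq_N2 Y); auto.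
  assert (P : forall k, exZ (fun j => (X j * Y (k - j)%Z) ^ 2) /\ Qf X Y k <= sumZ (fun j => X j ^ 2) * sumZ (fun j => Y j ^ 2)).
  { intros k. destruct (Zcomp (fun j => (X j * Y (k - j)%Z) ^ 2) (fun j => sumZ (fun j => Y j ^ 2) * X j ^ 2)) as [E S].
    intros j; apply pow2_ge_0.
    intros j. rewrite Rpow_mult_distr. rewrite Rmult_comm. apply Rmult_le_compat_r. apply pow2_ge_0.
    apply (single_le (fun j => Y j ^ 2)); auto.
    apply exZ_scal; auto.
    split; auto. unfold Qf. rewrite sumZ_scal in S. lra. }
  split; auto.
  intros a n.
  destruct (zs_sumZ (fun k j => (X j * Y (k - j)%Z) ^ 2) a n) as [E S].
  intros k; apply P.
  unfold Qf. rewrite <- S.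
  destruct (Zcomp (fun j => zs (fun k => (X j * Y (k - j)%Z) ^ 2) a n) (fun j => sumZ (fun j => Y j ^ 2) * X j ^ 2)) as [E' S'].
  intros j; apply zs_nonneg; intros; apply pow2_ge_0.
  intros j. rewrite (zs_ext _ (fun k => X j ^ 2 * Y (k - j)%Z ^ 2)) by (intros; apply Rpow_mult_distr).
  rewrite zs_scal, Rmult_comm. apply Rmult_le_compat_r. apply pow2_ge_0.
  rewrite (zs_shift (fun m => Y m ^ 2)). apply zs_le_sumZ; auto.
  apply exZ_scal; auto.
  rewrite sumZ_scal in S'. lra.
Qed.

Lemma rho_pos r m : 0 < rho r m.
Proof. apply Rpower_pos. Qed.

Lemma al_nneg : nneg al.
Proof. intros m. unfold al, alpha. apply Rlt_le, Rinv_0_lt_compat, sqrt_lt_R0. pose proof (pow2_ge_0 (IZR m)); lra. Qed.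

Lemma bil r x y : 1 <= r -> nneg x -> nneg y -> Lsq (fun j => rho r j * x j) -> Lsq (fun j => rho r j * y j) ->
  (forall k, k <> 0%Z -> exZ (fun j => Wt k j * (x j * y (k - j)%Z))) /\
  nneg (Tb x y) /\ Lsq (fun k => rho r k * Tb x y k) /\
  N2 (fun k => rho r k * Tb x y k) <= Cp r * sqrt 60 * (N2 (fun j => rho r j * x j) * N2 (fun j => rho r j * y j)).
Proof.
  intros Hr Hx Hy EX EY.
  set (X := fun j => rho r j * x j) in *. set (Y := fun j => rho r j * y j) in *.
  assert (HX : nneg X) by (intros j; unfold X; pose proof (rho_pos r j); specialize (Hx j); nra).
  assert (HY : nneg Y) by (intros j; unfold Y; pose proof (rho_pos r j); specialize (Hy j); nra).
  destruct Salpha as [Ea Sa].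
  pose proof al_nneg as Ha.
  destruct (Qsum X Y HX HY EX EY) as [Q1 Q2].
  set (NN := N2 X * N2 Y).
  set (SA := sumZ (fun m => al m ^ 2)) in *.
  assert (SA0 : 0 <= SA) by (apply sumZ_nonneg; auto; intros m; apply pow2_ge_0).
  assert (Cp0 : 0 <= Cp r) by (unfold Cp; pose proof (Rpower_pos 4 (r/2)); lra).
  assert (K1 : forall k, k <> 0%Z -> exZ (fun j => Wt k j * (x j * y (k - j)%Z)) /\
      rho r k * sumZ (fun j => Wt k j * (x j * y (k - j)%Z)) <= Cp r * (2 * (sqrt SA * sqrt (Qf X Y k)) + al k * NN)).
  { intros k Hk.
    set (g := fun j => Cp r * (al (k - j)%Z * (X j * Y (k - j)%Z) + (al j * (X j * Y (k - j)%Z) + al k * (X j * Y (k - j)%Z)))).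
    destruct (Q1 k) as [EQ _].
    destruct (N2_refl al k Ea) as [Ear Nar].
    destruct (CS (fun j => al (k - j)%Z) (fun j => X j * Y (k - j)%Z)) as [C1e C1]; auto.
    intros j; apply Ha. intros j; apply Rmult_le_pos; auto.
    destruct (CS al (fun j => X j * Y (k - j)%Z)) as [C2e C2]; auto.
    intros j; apply Rmult_le_pos; auto.
    destruct (N2_refl Y k EY) as [EYr NYr].
    destruct (CS X (fun j => Y (k - j)%Z)) as [C3e C3]; auto. intros j; apply HY.
    assert (Eg : exZ g).
    { unfold g. apply exZ_scal. apply exZ_plus; auto. apply exZ_plus; auto. apply exZ_scal; auto. }
    assert (Sg : sumZ g <= Cp r * (2 * (sqrt SA * sqrt (Qf X Y k)) + al k * NN)).
    { unfold g. rewrite sumZ_scal, sumZ_plus, sumZ_plus, sumZ_scal; auto.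
      2: apply exZ_scal; auto. 2: apply exZ_plus; auto; apply exZ_scal; auto.
      apply Rmult_le_compat_l; auto.
      assert (R1 : sumZ (fun j => al (k - j)%Z ^ 2) = SA).
      { unfold SA. apply (Zrefl (fun m => al m ^ 2)); auto. intros m; apply pow2_ge_0. }
      assert (R2 : sumZ (fun j => Y (k - j)%Z ^ 2) = sumZ (fun j => Y j ^ 2)).
      { apply (Zrefl (fun m => Y m ^ 2)); auto. intros m; apply pow2_ge_0. }
      rewrite R1 in C1. rewrite R2 in C3. fold SA in C2.
      change (sumZ (fun j => (X j * Y (k - j)%Z) ^ 2)) with (Qf X Y k) in C1, C2.
      change (sqrt (sumZ (fun j => X j ^ 2))) with (N2 X) in C3.
      change (sqrt (sumZ (fun j => Y j ^ 2))) with (N2 Y) in C3.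
      unfold NN.
      pose proof (Ha k).
      assert (al k * sumZ (fun j => X j * Y (k - j)%Z) <= al k * (N2 X * N2 Y)) by (apply Rmult_le_compat_l; auto).
      lra. }
    destruct (Zcomp (fun j => rho r k * (Wt k j * (x j * y (k - j)%Z))) g) as [E S]; auto.
    - intros j. pose proof (rho_pos r k). pose proof (Wt_ge1 k j Hk). specialize (Hx j). specialize (Hy (k - j)%Z).
      apply Rmult_le_pos; [lra|]. apply Rmult_le_pos; [lra|]. apply Rmult_le_pos; auto.
    - intros j. pose proof (PW r k j Hr Hk). unfold g, X, Y.
      assert (0 <= x j * y (k - j)%Z) by (apply Rmult_le_pos; auto).
      replace (rho r k * (Wt k j * (x j * y (k - j)%Z))) with ((rho r k * Wt k j) * (x j * y (k - j)%Z)) by ring.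
      eapply Rle_trans. apply Rmult_le_compat_r; [auto|apply H]. right; ring.
    - split.
      + apply (exZ_ext (fun j => / rho r k * (rho r k * (Wt k j * (x j * y (k - j)%Z))))).
        intros j. field. apply Rgt_not_eq, rho_pos. apply exZ_scal; auto.
      + rewrite sumZ_scal in S. lra. }
  assert (TN : nneg (Tb x y)).
  { intros k. unfold Tb. destruct (Z.eqb_spec k 0). lra.
    apply sumZ_nonneg. intros j. pose proof (Wt_ge1 k j n). specialize (Hx j). specialize (Hy (k - j)%Z).
    apply Rmult_le_pos; [lra|]. apply Rmult_le_pos; auto. apply K1; auto. }
  set (Rk := fun k => 2 * Cp r ^ 2 * (4 * SA * Qf X Y k + al k ^ 2 * NN ^ 2)).
  assert (PT : forall k, (rho r k * Tb x y k) ^ 2 <= Rk k).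
  { intros k. unfold Rk, Tb. pose proof (Ha k).
    assert (0 <= Qf X Y k) by (apply sumZ_nonneg; [intros j; apply pow2_ge_0|apply Q1]).
    destruct (Z.eqb_spec k 0).
    - rewrite Rmult_0_r. replace (0 ^ 2) with 0 by ring.
      assert (0 <= al k ^ 2 * NN ^ 2) by (apply Rmult_le_pos; apply pow2_ge_0).
      assert (0 <= Cp r ^ 2) by apply pow2_ge_0.
      apply Rmult_le_pos; [lra|]. apply Rplus_le_le_0_compat; auto. apply Rmult_le_pos; lra.
    - destruct (K1 k n) as [_ B].
      assert (0 <= rho r k * sumZ (fun j => Wt k j * (x j * y (k - j)%Z))).
      { pose proof (TN k). unfold Tb in H1. destruct (Z.eqb_spec k 0); [lia|]. pose proof (rho_pos r k). nra. }
      apply Rle_trans with ((Cp r * (2 * (sqrt SA * sqrt (Qf X Y k)) + al k * NN)) ^ 2).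
      apply pow_incr; auto.
      assert (E1 : (sqrt SA * sqrt (Qf X Y k)) ^ 2 = SA * Qf X Y k).
      { rewrite Rpow_mult_distr, !pow2_sqrt; auto. }
      set (u := sqrt SA * sqrt (Qf X Y k)) in *. set (v := al k * NN).
      assert ((2 * u + v) ^ 2 <= 2 * (4 * u ^ 2 + v ^ 2)) by (pose proof (pow2_ge_0 (2*u - v)); nra).
      replace ((Cp r * (2 * u + v)) ^ 2) with (Cp r ^ 2 * (2 * u + v) ^ 2) by ring.
      rewrite E1 in H2. unfold v in H2. rewrite Rpow_mult_distr in H2.
      assert (0 <= Cp r ^ 2) by apply pow2_ge_0.
      replace (2 * Cp r ^ 2 * (4 * SA * Qf X Y k + al k ^ 2 * NN ^ 2)) with (Cp r ^ 2 * (2 * (4 * (SA * Qf X Y k) + al k ^ 2 * NN ^ 2))) by ring.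
      apply Rmult_le_compat_l; auto. }
  assert (NX : N2 X ^ 2 * N2 Y ^ 2 = NN ^ 2) by (unfold NN; ring).
  destruct (Z1 (fun k => (rho r k * Tb x y k) ^ 2) (60 * Cp r ^ 2 * NN ^ 2)) as [E S].
  - intros k; apply pow2_ge_0.
  - intros N. unfold PZ. eapply Rle_trans. apply zs_mono. apply PT.
    unfold Rk. rewrite zs_scal, zs_plus, zs_scal.
    pose proof (Q2 (- Z.of_nat (S N))%Z (2 * S N)%nat).
    rewrite (zs_ext (fun k => al k ^ 2 * NN ^ 2) (fun k => NN ^ 2 * al k ^ 2)) by (intros; ring).
    rewrite zs_scal.
    pose proof (zs_le_sumZ (fun k => al k ^ 2) (- Z.of_nat (S N))%Z (2 * S N)%nat ltac:(intros m; apply pow2_ge_0) Ea).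
    fold SA in H0.
    assert (0 <= NN ^ 2) by apply pow2_ge_0.
    assert (0 <= Cp r ^ 2) by apply pow2_ge_0.
    rewrite NX in H.
    assert (4 * SA * zs (Qf X Y) (- Z.of_nat (S N)) (2 * S N) + NN ^ 2 * zs (fun k : Z => al k ^ 2) (- Z.of_nat (S N)) (2 * S N) <= 30 * NN ^ 2).
    { assert (4 * SA * zs (Qf X Y) (- Z.of_nat (S N)) (2 * S N) <= 4 * 6 * NN ^ 2).
      { apply Rle_trans with (4 * SA * NN ^ 2). apply Rmult_le_compat_l; lra. nra. }
      assert (NN ^ 2 * zs (fun k : Z => al k ^ 2) (- Z.of_nat (S N)) (2 * S N) <= NN ^ 2 * 6) by (apply Rmult_le_compat_l; lra).
      lra. }
    replace (60 * Cp r ^ 2 * NN ^ 2) with (2 * Cp r ^ 2 * (30 * NN ^ 2)) by ring.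
    apply Rmult_le_compat_l; [lra|]. auto.
  - split. intros k Hk; apply K1; auto. split; auto. split; auto. unfold N2 at 1.
    assert (0 <= NN) by (unfold NN; apply Rmult_le_pos; apply N2_nonneg).
    apply Rle_trans with (sqrt (60 * Cp r ^ 2 * NN ^ 2)). apply sqrt_le_1_alt; auto.
    rewrite (sqrt_mult_alt (60 * Cp r ^ 2)) by (pose proof (pow2_ge_0 (Cp r)); lra).
    rewrite sqrt_mult_alt by lra. rewrite !sqrt_pow2; auto. right; unfold NN; ring.
Qed.

Lemma expi_mult a b : Cmult (expi a) (expi b) = expi (a + b).
Proof. unfold expi. apply injective_projections; simpl; [rewrite cos_plus|rewrite sin_plus]; ring. Qed.

Lemma Cmod_expi a : Cmod (expi a) = 1.
Proof. unfold Cmod, expi; cbn [fst snd]. rewrite <- sqrt_1. f_equal. pose proof (sin2_cos2 a). unfold Rsqr in H. nra. Qed.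

Lemma Rabs_sin_le_pos x : 0 <= x -> Rabs (sin x) <= x.
Proof.
  intros H. destruct (Req_dec x 0). subst; rewrite sin_0, Rabs_R0; lra.
  pose proof (sin_lt_x x ltac:(lra)). pose proof (SIN_bound x).
  destruct (Rle_lt_dec 1 x). apply Rabs_le; lra.
  assert (0 < sin x) by (apply sin_gt_0; [lra|]; pose proof PI2_3_2; lra).
  rewrite Rabs_right; lra.
Qed.

Lemma Rabs_sin_le x : Rabs (sin x) <= Rabs x.
Proof.
  destruct (Rle_dec 0 x). rewrite (Rabs_right x) by lra. apply Rabs_sin_le_pos; auto.
  rewrite <- (Rabs_Ropp (sin x)), <- sin_neg, (Rabs_left x) by lra. apply Rabs_sin_le_pos; lra.
Qed.

Lemma Cmod_expi_1 a : Cmod (Cminus (expi a) (RtoC 1)) <= Rabs a.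
Proof.
  unfold Cmod, expi, Cminus, Cplus, Copp, RtoC; cbn [fst snd].
  replace ((cos a + - (1)) ^ 2 + (sin a + - 0) ^ 2) with ((2 * sin (a/2)) ^ 2).
  rewrite <- Rsqr_pow2, sqrt_Rsqr_abs. rewrite Rabs_mult, (Rabs_right 2) by lra.
  pose proof (Rabs_sin_le (a/2)). replace (Rabs (a/2)) with (Rabs a / 2) in H.
  lra. unfold Rdiv. rewrite Rabs_mult, (Rabs_right (/2)) by lra. auto.
  replace (cos a) with (cos (2 * (a/2))) by (f_equal; field). replace (sin a) with (sin (2 * (a/2))) by (f_equal; field). rewrite cos_2a_sin, sin_2a.
  pose proof (sin2_cos2 (a/2)). unfold Rsqr in H. nra.
Qed.

Lemma Cmod_iR x : Cmod (Cmult Ci (RtoC x)) = Rabs x.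
Proof. rewrite Cmod_mult, Cmod_Ci, Cmod_R. ring. Qed.

Lemma Cmod_cpow z m : Cmod (cpow z m) = Cmod z ^ m.
Proof. induction m; simpl. apply Cmod_1. rewrite Cmod_mult, IHm; auto. Qed.

Lemma cpow_nz z m : z <> RtoC 0 -> cpow z m <> RtoC 0.
Proof.
  intros H E. apply (f_equal Cmod) in E. rewrite Cmod_cpow, Cmod_0 in E.
  apply Cmod_gt_0 in H. pose proof (pow_lt _ m H). lra.
Qed.

Lemma iZ_nz k : k <> 0%Z -> Cmult Ci (RtoC (IZR k)) <> RtoC 0.
Proof.
  intros Hk E. apply (f_equal Cmod) in E. rewrite Cmod_iR, Cmod_0 in E.
  apply Rabs_eq_0 in E. apply eq_IZR_R0 in E. lia.
Qed.

Lemma Cmod_fconj f j : Cmod (fconj f j) = Cmod (f (- j)%Z).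
Proof. unfold fconj. apply Cmod_conj. Qed.

Lemma Cmod_dpos m P j : Cmod (dpos m P j) = Rabs (IZR j) ^ m * Cmod (P j).
Proof. unfold dpos. rewrite Cmod_mult, Cmod_cpow, Cmod_iR. auto. Qed.

Lemma Rabs_IZR_ge1 j : j <> 0%Z -> 1 <= Rabs (IZR j).
Proof.
  intros H. destruct (Z_lt_le_dec 0 j).
  - rewrite Rabs_right. apply IZR_le; lia. apply Rle_ge, IZR_le; lia.
  - rewrite Rabs_left. assert (IZR j <= -1) by (apply IZR_le; lia). lra. apply IZR_lt; lia.
Qed.

Lemma Cmod_dneg m P j : Cmod (dneg m P j) <= Cmod (P j).
Proof.
  unfold dneg. destruct (Z.eqb_spec j 0). rewrite Cmod_0; apply Cmod_ge_0.
  unfold Cdiv. rewrite Cmod_mult, Cmod_inv, Cmod_cpow, Cmod_iR. 2: apply cpow_nz, iZ_nz; auto.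
  pose proof (Rabs_IZR_ge1 j n). pose proof (pow_R1_Rle _ m H).
  rewrite <- (Rmult_1_r (Cmod (P j))) at 2. apply Rmult_le_compat_l. apply Cmod_ge_0.
  rewrite <- Rinv_1. apply Rinv_le_contravar; lra.
Qed.

Lemma Cmod_schr t P j : Cmod (schr t P j) = Cmod (P j).
Proof. unfold schr. rewrite Cmod_mult, Cmod_expi. ring. Qed.

Lemma Cmod_eomega t P j : Cmod (eomega t P j) = Cmod (P j).
Proof. unfold eomega. rewrite Cmod_mult, Cmod_expi. ring. Qed.

Definition Sf (f : Four) j := Cmod (f j) + Cmod (f (- j)%Z).
Definition Gr (a : nat) (A : Four) (f : Four) := forall j, Cmod (A j) <= Rabs (IZR j) ^ a * Sf f j.

Lemma Gr_id f : Gr 0 f f.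
Proof. intros j. unfold Sf. simpl. pose proof (Cmod_ge_0 (f (- j)%Z)). lra. Qed.
Lemma Gr_conj f : Gr 0 (fconj f) f.
Proof. intros j. unfold Sf. simpl. rewrite Cmod_fconj. pose proof (Cmod_ge_0 (f j)). lra. Qed.
Lemma Gr_schr a t P f : Gr a P f -> Gr a (schr t P) f.
Proof. intros H j. rewrite Cmod_schr. apply H. Qed.
Lemma Gr_dneg a m P f : Gr a P f -> Gr a (dneg m P) f.
Proof. intros H j. eapply Rle_trans; [apply Cmod_dneg|apply H]. Qed.
Lemma Gr_dpos a m P f : Gr a P f -> Gr (m + a) (dpos m P) f.
Proof. intros H j. rewrite Cmod_dpos, pow_add, Rmult_assoc. apply Rmult_le_compat_l. apply pow_le, Rabs_pos. apply H. Qed.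

Lemma grade_bound (a b : nat) (jj ll : R) : (a + b <= 2)%nat ->
  Rabs jj ^ a * Rabs ll ^ b <= 2 * (1 + (jj + ll) ^ 2) * (sqrt (1 + jj ^ 2) * sqrt (1 + ll ^ 2)).
Proof.
  intros Hab.
  assert (J1 : Rabs jj <= sqrt (1 + jj ^ 2)). { rewrite <- (sqrt_pow2 (Rabs jj)) by apply Rabs_pos. apply sqrt_le_1_alt. rewrite pow2_abs. lra. }
  assert (L1 : Rabs ll <= sqrt (1 + ll ^ 2)). { rewrite <- (sqrt_pow2 (Rabs ll)) by apply Rabs_pos. apply sqrt_le_1_alt. rewrite pow2_abs. lra. }
  assert (J0 : 1 <= sqrt (1 + jj ^ 2)). { rewrite <- sqrt_1 at 1. apply sqrt_le_1_alt. pose proof (pow2_ge_0 jj). lra. }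
  assert (L0 : 1 <= sqrt (1 + ll ^ 2)). { rewrite <- sqrt_1 at 1. apply sqrt_le_1_alt. pose proof (pow2_ge_0 ll). lra. }
  set (J := sqrt (1 + jj ^ 2)) in *. set (L := sqrt (1 + ll ^ 2)) in *.
  pose proof (Rabs_pos jj). pose proof (Rabs_pos ll).
  set (K := 1 + (jj + ll) ^ 2).
  assert (K1 : 1 <= K) by (unfold K; pose proof (pow2_ge_0 (jj + ll)); lra).
  assert (Kk : Rabs (jj + ll) <= K). { unfold K. rewrite <- (pow2_abs (jj + ll)). pose proof (pow2_ge_0 (Rabs (jj + ll) - 1)). nra. }
  assert (JL : 1 <= J * L) by nra.
  destruct a as [|[|[|a]]]; destruct b as [|[|[|b]]]; simpl; try lia.
  - nra.
  - nra.
  -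
    assert (Rabs ll <= Rabs (jj + ll) + Rabs jj) by (replace ll with ((jj + ll) - jj) at 1 by ring; apply Rabs_triang_inv2 || (split_Rabs; lra)).
    assert (Rabs ll * (Rabs ll * 1) <= L * (K + J)) by (rewrite Rmult_1_r; apply Rmult_le_compat; lra).
    assert (K * J * L >= J * L) by nra. assert (K * L >= L) by nra. nra.
  - nra.
  - nra.
  - assert (Rabs jj <= Rabs (jj + ll) + Rabs ll) by (split_Rabs; lra).
    assert (Rabs jj * (Rabs jj * 1) <= J * (K + L)) by (rewrite Rmult_1_r; apply Rmult_le_compat; lra).
    assert (K * J * L >= J * L) by nra. assert (K * J >= J) by nra. nra.
Qed.

Lemma Hs_rho r k : Hs_weight r k = rho r k ^ 2.
Proof. unfold Hs_weight, rho. replace (Rpower (1 + IZR k ^ 2) (r/2) ^ 2) with (Rpower (1 + IZR k ^ 2) (r/2) * Rpower (1 + IZR k ^ 2) (r/2)) by ring. rewrite <- Rpower_plus. f_equal. field. Qed.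

Definition Rf r (f : Four) j := rho r j * Cmod (f j).

Lemma inH_L2 r f : inH r f -> Lsq (Rf r f).
Proof. intros H. unfold Lsq, Rf. apply (exZ_ext (fun k => Hs_weight r k * Cmod (f k) ^ 2)); auto.
  intros j; rewrite Hs_rho; ring. Qed.

Lemma L2_inH r f : Lsq (Rf r f) -> inH r f.
Proof. intros H. unfold inH. apply (exZ_ext (fun j => (Rf r f j) ^ 2)); auto.
  intros j; unfold Rf; rewrite Hs_rho; ring. Qed.

Lemma normH_N2 r f : normH r f = N2 (Rf r f).
Proof. unfold normH, N2, Rf. f_equal. apply sumZ_ext. intros j; rewrite Hs_rho; ring. Qed.

Lemma Rf_nneg r f : nneg (Rf r f).
Proof. intros j. unfold Rf. apply Rmult_le_pos. apply Rlt_le, rho_pos. apply Cmod_ge_0. Qed.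

Lemma rho_neg r j : rho r (- j)%Z = rho r j.
Proof. unfold rho. rewrite opp_IZR. f_equal. ring. Qed.

Lemma sqrt_le_rho r j : 1 <= r -> sqrt (1 + IZR j ^ 2) <= rho r j.
Proof. intros Hr. unfold rho. apply Rpower_ge_sqrt. pose proof (pow2_ge_0 (IZR j)); lra. lra. Qed.

Definition Ef (f : Four) j := sqrt (1 + IZR j ^ 2) * Sf f j.

Lemma Ef_L2 r f : 1 <= r -> inH r f -> nneg (Ef f) /\ Lsq (Ef f).
Proof.
  intros Hr H. apply inH_L2 in H.
  assert (Sn : forall j, 0 <= Sf f j) by (intros j; unfold Sf; pose proof (Cmod_ge_0 (f j)); pose proof (Cmod_ge_0 (f (-j)%Z)); lra).
  destruct (N2_refl (Rf r f) 0%Z H) as [H' _].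
  destruct (Mink (Rf r f) (fun j => Rf r f (0 - j)%Z)) as [HM _]; auto. apply Rf_nneg. intros j; apply Rf_nneg.
  assert (En : nneg (Ef f)) by (intros j; unfold Ef; apply Rmult_le_pos; [apply sqrt_pos| auto]).
  split; auto.
  apply (N2_dom (fun j => Rf r f j + Rf r f (0 - j)%Z)); auto.
  intros j. unfold Ef, Rf, Sf. replace (0 - j)%Z with (- j)%Z by lia. rewrite rho_neg.
  pose proof (sqrt_le_rho r j Hr). pose proof (Cmod_ge_0 (f j)). pose proof (Cmod_ge_0 (f (-j)%Z)). nra.
Qed.

Lemma exC_fmul (A B f : Four) a b k r : 1 <= r -> inH r f -> (a + b <= 2)%nat -> Gr a A f -> Gr b B f ->
  exC (fun j => Cmult (A j) (B (k - j)%Z)).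
Proof.
  intros Hr Hf Hab GA GB. destruct (Ef_L2 r f Hr Hf) as [En EL].
  destruct (N2_refl (Ef f) k EL) as [ELr _].
  destruct (CS (Ef f) (fun j => Ef f (k - j)%Z)) as [Ec _]; auto. intros j; apply En.
  apply (exC_comp _ (fun j => (2 * (1 + IZR k ^ 2)) * (Ef f j * Ef f (k - j)%Z))).
  2: apply exZ_scal; auto.
  intros j. rewrite Cmod_mult.
  assert (Sn : forall j, 0 <= Sf f j) by (intros i; unfold Sf; pose proof (Cmod_ge_0 (f i)); pose proof (Cmod_ge_0 (f (-i)%Z)); lra).
  apply Rle_trans with ((Rabs (IZR j) ^ a * Sf f j) * (Rabs (IZR (k - j)) ^ b * Sf f (k - j)%Z)).
  apply Rmult_le_compat; auto; apply Cmod_ge_0.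
  pose proof (grade_bound a b (IZR j) (IZR (k - j)) Hab).
  replace (IZR j + IZR (k - j)) with (IZR k) in H by (rewrite minus_IZR; ring).
  unfold Ef.
  replace (Rabs (IZR j) ^ a * Sf f j * (Rabs (IZR (k - j)) ^ b * Sf f (k - j)%Z)) with
    ((Rabs (IZR j) ^ a * Rabs (IZR (k - j)) ^ b) * (Sf f j * Sf f (k - j)%Z)) by ring.
  replace (2 * (1 + IZR k ^ 2) * (sqrt (1 + IZR j ^ 2) * Sf f j * (sqrt (1 + IZR (k - j) ^ 2) * Sf f (k - j)%Z))) with
    ((2 * (1 + IZR k ^ 2) * (sqrt (1 + IZR j ^ 2) * sqrt (1 + IZR (k - j) ^ 2))) * (Sf f j * Sf f (k - j)%Z)) by ring.
  apply Rmult_le_compat_r; auto. apply Rmult_le_pos; auto.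
Qed.

Definition ci (k : Z) : C := Cmult Ci (RtoC (IZR k)).

Lemma dneg_nz m h k : k <> 0%Z -> dneg m h k = Cdiv (h k) (cpow (ci k) m).
Proof. intros; unfold dneg; destruct (Z.eqb_spec k 0); [lia|reflexivity]. Qed.

Lemma ck_nz m k : k <> 0%Z -> cpow (ci k) m <> RtoC 0.
Proof. intros; apply cpow_nz, iZ_nz; auto. Qed.

Lemma ci_nz k : k <> 0%Z -> ci k <> RtoC 0.
Proof. intros; apply iZ_nz; auto. Qed.

Lemma Cmod_ck m k : Cmod (cpow (ci k) m) = Rabs (IZR k) ^ m.
Proof. rewrite Cmod_cpow. unfold ci. rewrite Cmod_iR. auto. Qed.

Lemma Cmod_ihalf : Cmod ihalf = 1/2.
Proof. unfold ihalf. rewrite Cmod_iR. apply Rabs_right; lra. Qed.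

Lemma Cmod_1e a : Cmod (Cminus (RtoC 1) (expi a)) <= Rabs a.
Proof.
  replace (Cminus (RtoC 1) (expi a)) with (Cmult (Copp (RtoC 1)) (Cminus (expi a) (RtoC 1))) by ring.
  rewrite Cmod_mult, Cmod_m1, Rmult_1_l. apply Cmod_expi_1.
Qed.

Lemma Cmod_2 : Cmod (RtoC 2) = 2.
Proof. rewrite Cmod_R. apply Rabs_right; lra. Qed.

Lemma Rabs_sq x : Rabs x ^ 2 = x ^ 2.
Proof. apply pow2_abs. Qed.

Lemma Wt_ge k j : k <> 0%Z -> (IZR j ^ 2 + IZR (k - j) ^ 2) / IZR k ^ 2 <= Wt k j.
Proof. intros; unfold Wt; lra. Qed.

Lemma k2_pos k : k <> 0%Z -> 0 < IZR k ^ 2.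
Proof. intros; pose proof (IZR_sq_ge1 k H); lra. Qed.

Definition G1 tau f k := Cmult (RtoC 2) (L1 tau f k).

Definition Phi1 tau k j : C := if Z.eqb j 0 then RtoC 0 else
   Cmult (RtoC 2) (Cmult ihalf (Cmult (Cdiv (cpow (ci (k - j)) 2) (Cmult (cpow (ci k) 2) (cpow (ci j) 2)))
     (Cminus (RtoC 1) (expi (- (2*tau) * IZR j ^ 2))))).

Lemma G1_form tau f k r : 1 <= r -> inH r f -> k <> 0%Z ->
  exC (fun j => Cmult (Phi1 tau k j) (Cmult (fconj f j) (fconj f (k - j)%Z))) /\
  G1 tau f k = sumZC (fun j => Cmult (Phi1 tau k j) (Cmult (fconj f j) (fconj f (k - j)%Z))).
Proof.
  intros Hr Hf Hk.
  set (F := fconj f).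
  set (A1 := schr (2*tau) (dneg 2 F)). set (B1 := dpos 2 F). set (A2 := dpos 2 F). set (B2 := dneg 2 F).
  assert (E1 : exC (fun j => Cmult (A1 j) (B1 (k - j)%Z))).
  { apply (exC_fmul A1 B1 f 0 2 k r); auto. apply Gr_schr, Gr_dneg, Gr_conj. apply (Gr_dpos 0 2), Gr_conj. }
  assert (E2 : exC (fun j => Cmult (A2 j) (B2 (k - j)%Z))).
  { apply (exC_fmul A2 B2 f 2 0 k r); auto. apply (Gr_dpos 0 2), Gr_conj. apply Gr_dneg, Gr_conj. }
  assert (R2 : forall j, Cmult (A2 (k - j)%Z) (B2 (k - (k - j))%Z) = Cmult (A2 (k - j)%Z) (B2 j)).
  { intros j. replace (k - (k - j))%Z with j by lia. auto. }
  assert (E2r : exC (fun j => Cmult (A2 (k - j)%Z) (B2 j))).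
  { apply (exC_ext _ _ R2). apply (exC_refl (fun j => Cmult (A2 j) (B2 (k - j)%Z))); auto. }
  set (c1 := Cmult (RtoC 2) (Cdiv (Copp ihalf) (cpow (ci k) 2))).
  set (c2 := Cmult (RtoC 2) (Cdiv ihalf (cpow (ci k) 2))).
  assert (Hin : forall j, Cplus (Cmult c1 (Cmult (A1 j) (B1 (k - j)%Z))) (Cmult c2 (Cmult (A2 (k - j)%Z) (B2 j)))
      = Cmult (Phi1 tau k j) (Cmult (F j) (F (k - j)%Z))).
  { intros j. unfold A1, B1, A2, B2, c1, c2, Phi1, schr, dpos, dneg.
    pose proof (ck_nz 2 k Hk).
    destruct (Z.eqb_spec j 0).
    - ring.
    - pose proof (ck_nz 2 j n). fold (ci j) (ci (k - j)%Z). field. auto. }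
  split.
  - apply (exC_ext _ _ Hin). apply exC_plus; apply exC_scal; auto.
  - rewrite <- (sumZC_ext _ _ Hin). rewrite sumZC_plus by (apply exC_scal; auto).
    rewrite !sumZC_scal by auto.
    rewrite <- (sumZC_ext _ _ R2), (sumZC_refl (fun j => Cmult (A2 j) (B2 (k - j)%Z))) by auto.
    unfold G1, L1, fadd, fscal. rewrite !dneg_nz by auto. unfold fmul. unfold A1, B1, A2, B2, F.
    unfold c1, c2. pose proof (ck_nz 2 k Hk). field. auto.
Qed.

Lemma Phi1_bound tau k j : 0 < tau -> k <> 0%Z -> Cmod (Phi1 tau k j) <= 2 * tau * Wt k j.
Proof.
  intros Ht Hk. pose proof (Wt_ge1 k j Hk). unfold Phi1. destruct (Z.eqb_spec j 0).
  - rewrite Cmod_0. nra.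
  - rewrite !Cmod_mult, Cmod_2, Cmod_ihalf, Cmod_div, Cmod_mult, !Cmod_ck.
    2: apply Cmult_neq_0; apply ck_nz; auto.
    pose proof (Cmod_1e (- (2 * tau) * IZR j ^ 2)).
    rewrite !Rabs_sq in *. pose proof (k2_pos k Hk). pose proof (k2_pos j n).
    rewrite Rabs_mult, Rabs_Ropp, (Rabs_right (2*tau)), (Rabs_right (IZR j ^ 2)) in H0 by (try apply Rle_ge, pow2_ge_0; lra).
    pose proof (Wt_ge k j Hk).
    assert (IZR (k - j) ^ 2 / IZR k ^ 2 <= Wt k j).
    { eapply Rle_trans; [|apply H3]. apply Rmult_le_compat_r. apply Rlt_le, Rinv_0_lt_compat; lra. pose proof (pow2_ge_0 (IZR j)); lra. }
    set (c := Cmod (Cminus (RtoC 1) (expi (- (2 * tau) * IZR j ^ 2)))) in *.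
    replace (2 * (1 / 2 * (IZR (k - j) ^ 2 / (IZR k ^ 2 * IZR j ^ 2) * c))) with ((IZR (k - j) ^ 2 / (IZR k ^ 2 * IZR j ^ 2)) * c) by (generalize (IZR (k - j) ^ 2 / (IZR k ^ 2 * IZR j ^ 2)); intros; field).
    assert (Hk' : IZR k <> 0) by (apply not_0_IZR; auto). assert (Hj' : IZR j <> 0) by (apply not_0_IZR; auto).
    apply Rle_trans with (IZR (k - j) ^ 2 / (IZR k ^ 2 * IZR j ^ 2) * (2 * tau * IZR j ^ 2)).
    { apply Rmult_le_compat_l; auto. apply Rdiv_le_0_compat. apply pow2_ge_0. nra. }
    replace (IZR (k - j) ^ 2 / (IZR k ^ 2 * IZR j ^ 2) * (2 * tau * IZR j ^ 2)) with (2 * tau * (IZR (k - j) ^ 2 / IZR k ^ 2)) by (field; auto).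
    apply Rmult_le_compat_l; lra.
Qed.

Definition G2 tau f k := Cmult (RtoC 2) (L2 tau f k).

Definition Phi2 tau k j : C :=
  Cmult (RtoC 2) (Cminus
    (Cmult ihalf (Cmult (Cdiv (cpow (ci j) 1) (cpow (ci k) 3))
       (Cminus (RtoC 1) (expi (- tau * IZR k ^ 2 + - tau * IZR j ^ 2 + - - tau * IZR (k - j) ^ 2)))))
    (Cmult (RtoC tau) (Cdiv (cpow (ci j) 2) (cpow (ci k) 2)))).

Lemma G2_form tau f k r : 1 <= r -> inH r f -> k <> 0%Z ->
  exC (fun j => Cmult (Phi2 tau k j) (Cmult (fconj f j) (fconj f (k - j)%Z))) /\
  G2 tau f k = sumZC (fun j => Cmult (Phi2 tau k j) (Cmult (fconj f j) (fconj f (k - j)%Z))).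
Proof.
  intros Hr Hf Hk.
  set (F := fconj f).
  assert (E1 : exC (fun j => Cmult (schr tau (dpos 1 F) j) (schr (- tau) F (k - j)%Z))).
  { apply (exC_fmul _ _ f 1 0 k r); auto. apply Gr_schr, (Gr_dpos 0 1), Gr_conj. apply Gr_schr, Gr_conj. }
  assert (E2 : exC (fun j => Cmult (dpos 1 F j) (F (k - j)%Z))).
  { apply (exC_fmul _ _ f 1 0 k r); auto. apply (Gr_dpos 0 1), Gr_conj. apply Gr_conj. }
  assert (E3 : exC (fun j => Cmult (dpos 2 F j) (F (k - j)%Z))).
  { apply (exC_fmul _ _ f 2 0 k r); auto. apply (Gr_dpos 0 2), Gr_conj. apply Gr_conj. }
  set (c1 := Cmult (RtoC 2) (Cdiv (Cmult (Copp ihalf) (expi (- tau * IZR k ^ 2))) (cpow (ci k) 3))).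
  set (c2 := Cmult (RtoC 2) (Cdiv ihalf (cpow (ci k) 3))).
  set (c3 := Cmult (RtoC 2) (Cdiv (Copp (RtoC tau)) (cpow (ci k) 2))).
  assert (Hin : forall j, Cplus (Cmult c1 (Cmult (schr tau (dpos 1 F) j) (schr (- tau) F (k - j)%Z)))
      (Cplus (Cmult c2 (Cmult (dpos 1 F j) (F (k - j)%Z))) (Cmult c3 (Cmult (dpos 2 F j) (F (k - j)%Z))))
      = Cmult (Phi2 tau k j) (Cmult (F j) (F (k - j)%Z))).
  { intros j. unfold c1, c2, c3, Phi2, schr, dpos. rewrite <- !expi_mult.
    pose proof (ck_nz 2 k Hk). pose proof (ck_nz 3 k Hk). fold (ci j). field. auto. }
  split.
  - apply (exC_ext _ _ Hin). apply exC_plus. apply exC_scal; auto. apply exC_plus; apply exC_scal; auto.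
  - rewrite <- (sumZC_ext _ _ Hin). rewrite sumZC_plus, sumZC_plus, !sumZC_scal; auto.
    2: apply exC_scal; auto. 2: apply exC_scal; auto. 2: apply exC_scal; auto. 2: apply exC_plus; apply exC_scal; auto.
    unfold G2, L2, fadd, fsub, fscal. unfold schr at 1. rewrite !dneg_nz by auto. unfold fmul. fold F.
    unfold c1, c2, c3. pose proof (ck_nz 2 k Hk). pose proof (ck_nz 3 k Hk). field. auto.
Qed.

Lemma Phi2_bound tau k j : 0 < tau -> k <> 0%Z -> Cmod (Phi2 tau k j) <= 4 * tau * Wt k j.
Proof.
  intros Ht Hk. pose proof (Wt_ge1 k j Hk). unfold Phi2.
  unfold Cminus at 1. rewrite Cmod_mult, Cmod_2.
  eapply Rle_trans. apply Rmult_le_compat_l. lra. apply Cmod_triangle.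
  rewrite (Cmod_mult (Copp (RtoC 1)) _) || idtac.
  replace (Copp (Cmult (RtoC tau) (Cdiv (cpow (ci j) 2) (cpow (ci k) 2)))) with (Cmult (RtoC (- tau)) (Cdiv (cpow (ci j) 2) (cpow (ci k) 2))) by (apply injective_projections; simpl; ring).
  rewrite !Cmod_mult, Cmod_ihalf, !Cmod_div, !Cmod_ck, Cmod_R by (apply ck_nz; auto).
  pose proof (Cmod_1e (- tau * IZR k ^ 2 + - tau * IZR j ^ 2 + - - tau * IZR (k - j) ^ 2)).
  assert (Eth : Rabs (- tau * IZR k ^ 2 + - tau * IZR j ^ 2 + - - tau * IZR (k - j) ^ 2) = 2 * tau * (Rabs (IZR k) * Rabs (IZR j))).
  { replace (- tau * IZR k ^ 2 + - tau * IZR j ^ 2 + - - tau * IZR (k - j) ^ 2) with (- (2 * tau) * (IZR k * IZR j)) by (rewrite minus_IZR; ring).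
    rewrite Rabs_mult, Rabs_Ropp, (Rabs_mult (IZR k)), (Rabs_right (2 * tau)) by lra. auto. }
  rewrite Eth in H0.
  set (c := Cmod (Cminus (RtoC 1) (expi (- tau * IZR k ^ 2 + - tau * IZR j ^ 2 + - - tau * IZR (k - j) ^ 2)))) in *.
  rewrite Rabs_Ropp, (Rabs_right tau) by lra.
  pose proof (k2_pos k Hk). assert (Hk' : IZR k <> 0) by (apply not_0_IZR; auto).
  assert (ak : 0 < Rabs (IZR k)) by (apply Rabs_pos_lt; auto).
  pose proof (Rabs_pos (IZR j)).
  assert (B1 : 1 / 2 * (Rabs (IZR j) ^ 1 / Rabs (IZR k) ^ 3 * c) <= tau * (IZR j ^ 2 / IZR k ^ 2)).
  { apply Rle_trans with (1/2 * (Rabs (IZR j) ^ 1 / Rabs (IZR k) ^ 3 * (2 * tau * (Rabs (IZR k) * Rabs (IZR j))))).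
    apply Rmult_le_compat_l. lra. apply Rmult_le_compat_l. apply Rdiv_le_0_compat. apply pow_le; lra. apply pow_lt; auto. lra.
    rewrite <- (Rabs_sq (IZR j)), <- (Rabs_sq (IZR k)). right. field. lra. }
  assert (B2 : Rabs (IZR j) ^ 2 / Rabs (IZR k) ^ 2 = IZR j ^ 2 / IZR k ^ 2) by (rewrite !Rabs_sq; auto).
  assert (B3 : IZR j ^ 2 / IZR k ^ 2 <= Wt k j).
  { eapply Rle_trans; [|apply Wt_ge; auto]. apply Rmult_le_compat_r. apply Rlt_le, Rinv_0_lt_compat; lra. pose proof (pow2_ge_0 (IZR (k - j))); lra. }
  rewrite B2. nra.
Qed.

Lemma Cmod_opp (z : C) : Cmod (Copp z) = Cmod z.
Proof. replace (Copp z) with (Cmult (Copp (RtoC 1)) z) by ring. rewrite Cmod_mult, Cmod_m1. ring. Qed.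

Lemma Wt_jl k j : k <> 0%Z -> 2 * (Rabs (IZR j) * Rabs (IZR (k - j))) / IZR k ^ 2 <= Wt k j.
Proof.
  intros Hk. eapply Rle_trans; [|apply Wt_ge; auto]. pose proof (k2_pos k Hk).
  apply Rmult_le_compat_r. apply Rlt_le, Rinv_0_lt_compat; lra.
  rewrite <- (Rabs_sq (IZR j)), <- (Rabs_sq (IZR (k - j))). pose proof (pow2_ge_0 (Rabs (IZR j) - Rabs (IZR (k - j)))). nra.
Qed.

Definition G3 tau f k := L3 tau f k.

Definition Phi3 tau k j : C :=
  Cmult (Copp Ci) (Cmult (Cdiv (Cminus (expi (- (2*tau) * IZR k ^ 2)) (RtoC 1)) (cpow (ci k) 4))
    (Cmult (cpow (ci j) 1) (cpow (ci (k - j)) 1))).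

Lemma G3_form tau f k r : 1 <= r -> inH r f -> k <> 0%Z ->
  exC (fun j => Cmult (Phi3 tau k j) (Cmult (fconj f j) (fconj f (k - j)%Z))) /\
  G3 tau f k = sumZC (fun j => Cmult (Phi3 tau k j) (Cmult (fconj f j) (fconj f (k - j)%Z))).
Proof.
  intros Hr Hf Hk.
  set (F := fconj f).
  assert (E1 : exC (fun j => Cmult (dpos 1 F j) (dpos 1 F (k - j)%Z))).
  { apply (exC_fmul _ _ f 1 1 k r); auto; apply (Gr_dpos 0 1), Gr_conj. }
  set (c1 := Cmult (Copp Ci) (Cdiv (Cminus (expi (- (2*tau) * IZR k ^ 2)) (RtoC 1)) (cpow (ci k) 4))).
  assert (Hin : forall j, Cmult c1 (Cmult (dpos 1 F j) (dpos 1 F (k - j)%Z))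
      = Cmult (Phi3 tau k j) (Cmult (F j) (F (k - j)%Z))).
  { intros j. unfold c1, Phi3, dpos. pose proof (ck_nz 4 k Hk). fold (ci j) (ci (k - j)%Z). field. auto. }
  split.
  - apply (exC_ext _ _ Hin). apply exC_scal; auto.
  - rewrite <- (sumZC_ext _ _ Hin). rewrite sumZC_scal; auto.
    unfold G3, L3, fsub, fscal. rewrite !dneg_nz by auto. unfold schr, fmul. fold F.
    unfold c1. pose proof (ck_nz 4 k Hk). field. auto.
Qed.

Lemma Phi3_bound tau k j : 0 < tau -> k <> 0%Z -> Cmod (Phi3 tau k j) <= tau * Wt k j.
Proof.
  intros Ht Hk. pose proof (Wt_jl k j Hk). unfold Phi3.
  rewrite !Cmod_mult, Cmod_opp, Cmod_Ci, Cmod_div, !Cmod_ck by (apply ck_nz; auto).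
  pose proof (Cmod_expi_1 (- (2 * tau) * IZR k ^ 2)).
  assert (Eth : Rabs (- (2 * tau) * IZR k ^ 2) = 2 * tau * IZR k ^ 2).
  { rewrite Rabs_mult, Rabs_Ropp, (Rabs_right (2 * tau)), Rabs_right by (try apply Rle_ge, pow2_ge_0; lra). auto. }
  rewrite Eth in H0.
  set (c := Cmod (Cminus (expi (- (2 * tau) * IZR k ^ 2)) (RtoC 1))) in *.
  pose proof (k2_pos k Hk). pose proof (Rabs_pos (IZR j)). pose proof (Rabs_pos (IZR (k - j))).
  assert (ak4 : Rabs (IZR k) ^ 4 = IZR k ^ 2 * IZR k ^ 2) by (rewrite <- (Rabs_sq (IZR k)); ring).
  rewrite ak4.
  apply Rle_trans with (1 * (2 * tau * IZR k ^ 2 / (IZR k ^ 2 * IZR k ^ 2) * (Rabs (IZR j) ^ 1 * Rabs (IZR (k - j)) ^ 1))).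
  { apply Rmult_le_compat_l. lra. apply Rmult_le_compat_r. apply Rmult_le_pos; apply pow_le; lra.
    apply Rmult_le_compat_r. apply Rlt_le, Rinv_0_lt_compat; nra. lra. }
  apply Rle_trans with (tau * (2 * (Rabs (IZR j) * Rabs (IZR (k - j))) / IZR k ^ 2)).
  right. assert (IZR k <> 0) by (apply not_0_IZR; auto). field. auto. apply Rmult_le_compat_l; lra.
Qed.

Definition G4 tau f k := L4 tau f k.

Definition Phi4 tau k j : C :=
  Cminus (Cmult (Cdiv Ci (cpow (ci k) 2)) (Cminus (expi (- - tau * IZR k ^ 2 + - tau * IZR j ^ 2 + - tau * IZR (k - j) ^ 2)) (RtoC 1)))
    (Cmult (RtoC (2*tau)) (Cdiv (Cmult (cpow (ci j) 1) (cpow (ci (k - j)) 1)) (cpow (ci k) 2))).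

Lemma G4_form tau f k r : 1 <= r -> inH r f -> k <> 0%Z ->
  exC (fun j => Cmult (Phi4 tau k j) (Cmult (fconj f j) (fconj f (k - j)%Z))) /\
  G4 tau f k = sumZC (fun j => Cmult (Phi4 tau k j) (Cmult (fconj f j) (fconj f (k - j)%Z))).
Proof.
  intros Hr Hf Hk.
  set (F := fconj f).
  assert (E1 : exC (fun j => Cmult (schr tau F j) (schr tau F (k - j)%Z))).
  { apply (exC_fmul _ _ f 0 0 k r); auto; apply Gr_schr, Gr_conj. }
  assert (E2 : exC (fun j => Cmult (F j) (F (k - j)%Z))).
  { apply (exC_fmul _ _ f 0 0 k r); auto; apply Gr_conj. }
  assert (E3 : exC (fun j => Cmult (dpos 1 F j) (dpos 1 F (k - j)%Z))).
  { apply (exC_fmul _ _ f 1 1 k r); auto; apply (Gr_dpos 0 1), Gr_conj. }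
  set (c1 := Cdiv (Cmult Ci (expi (- - tau * IZR k ^ 2))) (cpow (ci k) 2)).
  set (c2 := Cdiv (Copp Ci) (cpow (ci k) 2)).
  set (c3 := Cdiv (Copp (RtoC (2 * tau))) (cpow (ci k) 2)).
  assert (Hin : forall j, Cplus (Cmult c1 (Cmult (schr tau F j) (schr tau F (k - j)%Z)))
      (Cplus (Cmult c2 (Cmult (F j) (F (k - j)%Z))) (Cmult c3 (Cmult (dpos 1 F j) (dpos 1 F (k - j)%Z))))
      = Cmult (Phi4 tau k j) (Cmult (F j) (F (k - j)%Z))).
  { intros j. unfold c1, c2, c3, Phi4, schr, dpos. rewrite <- !expi_mult.
    pose proof (ck_nz 2 k Hk). fold (ci j) (ci (k - j)%Z). field. auto. }
  split.
  - apply (exC_ext _ _ Hin). apply exC_plus. apply exC_scal; auto. apply exC_plus; apply exC_scal; auto.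
  - rewrite <- (sumZC_ext _ _ Hin). rewrite sumZC_plus, sumZC_plus, !sumZC_scal; auto.
    2: apply exC_scal; auto. 2: apply exC_scal; auto. 2: apply exC_scal; auto. 2: apply exC_plus; apply exC_scal; auto.
    unfold G4, L4, fsub, fscal. rewrite !dneg_nz by auto. unfold schr at 1. unfold fmul. fold F.
    unfold c1, c2, c3. pose proof (ck_nz 2 k Hk). field. auto.
Qed.

Lemma Phi4_bound tau k j : 0 < tau -> k <> 0%Z -> Cmod (Phi4 tau k j) <= 2 * tau * Wt k j.
Proof.
  intros Ht Hk. pose proof (Wt_jl k j Hk). unfold Phi4.
  unfold Cminus at 1. eapply Rle_trans. apply Cmod_triangle.
  rewrite Cmod_opp, !Cmod_mult, !Cmod_div, Cmod_Ci, Cmod_mult, !Cmod_ck, Cmod_R by (apply ck_nz; auto).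
  pose proof (Cmod_expi_1 (- - tau * IZR k ^ 2 + - tau * IZR j ^ 2 + - tau * IZR (k - j) ^ 2)).
  assert (Eth : Rabs (- - tau * IZR k ^ 2 + - tau * IZR j ^ 2 + - tau * IZR (k - j) ^ 2) = 2 * tau * (Rabs (IZR j) * Rabs (IZR (k - j)))).
  { replace (- - tau * IZR k ^ 2 + - tau * IZR j ^ 2 + - tau * IZR (k - j) ^ 2) with ((2 * tau) * (IZR j * IZR (k - j))) by (rewrite minus_IZR; ring).
    rewrite Rabs_mult, (Rabs_mult (IZR j)), (Rabs_right (2 * tau)) by lra. auto. }
  rewrite Eth in H0.
  set (c := Cmod (Cminus (expi (- - tau * IZR k ^ 2 + - tau * IZR j ^ 2 + - tau * IZR (k - j) ^ 2)) (RtoC 1))) in *.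
  pose proof (k2_pos k Hk). assert (Hk' : IZR k <> 0) by (apply not_0_IZR; auto). pose proof (Rabs_pos (IZR j)). pose proof (Rabs_pos (IZR (k - j))).
  rewrite (Rabs_right (2 * tau)) by lra. rewrite Rabs_sq.
  assert (c / IZR k ^ 2 <= 2 * tau * (Rabs (IZR j) * Rabs (IZR (k - j))) / IZR k ^ 2).
  { apply Rmult_le_compat_r. apply Rlt_le, Rinv_0_lt_compat; lra. auto. }
  replace (1 / IZR k ^ 2 * c) with (c / IZR k ^ 2) by (field; auto).
  replace (2 * tau * (Rabs (IZR j) ^ 1 * Rabs (IZR (k - j)) ^ 1 / IZR k ^ 2)) with (2 * tau * (Rabs (IZR j) * Rabs (IZR (k - j))) / IZR k ^ 2) by (field; auto).
  replace (2 * tau * (Rabs (IZR j) * Rabs (IZR (k - j))) / IZR k ^ 2) with (tau * (2 * (Rabs (IZR j) * Rabs (IZR (k - j))) / IZR k ^ 2)) in * by (field; auto).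
  assert (tau * (2 * (Rabs (IZR j) * Rabs (IZR (k - j))) / IZR k ^ 2) <= tau * Wt k j) by (apply Rmult_le_compat_l; lra).
  lra.
Qed.

Definition G5 tau f k := I1 tau f k.

Definition Phi5 tau k j : C :=
  if Z.eqb j 0 then RtoC 0 else if Z.eqb (k - j) 0 then RtoC 0 else
  Cmult ihalf (Cdiv (Cminus (RtoC 1) (expi (- tau * IZR k ^ 2 + - - tau * IZR j ^ 2 + - - tau * IZR (k - j) ^ 2)))
    (Cmult (cpow (ci j) 1) (cpow (ci (k - j)) 1))).

Lemma G5_form tau f k r : 1 <= r -> inH r f -> k <> 0%Z ->
  exC (fun j => Cmult (Phi5 tau k j) (Cmult (f j) (f (k - j)%Z))) /\
  G5 tau f k = sumZC (fun j => Cmult (Phi5 tau k j) (Cmult (f j) (f (k - j)%Z))).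
Proof.
  intros Hr Hf Hk.
  assert (E1 : exC (fun j => Cmult (dneg 1 f j) (dneg 1 f (k - j)%Z))).
  { apply (exC_fmul _ _ f 0 0 k r); auto; apply Gr_dneg, Gr_id. }
  assert (E2 : exC (fun j => Cmult (schr (- tau) (dneg 1 f) j) (schr (- tau) (dneg 1 f) (k - j)%Z))).
  { apply (exC_fmul _ _ f 0 0 k r); auto; apply Gr_schr, Gr_dneg, Gr_id. }
  set (c1 := ihalf).
  set (c2 := Cmult (Copp ihalf) (expi (- tau * IZR k ^ 2))).
  assert (Hin : forall j, Cplus (Cmult c1 (Cmult (dneg 1 f j) (dneg 1 f (k - j)%Z)))
      (Cmult c2 (Cmult (schr (- tau) (dneg 1 f) j) (schr (- tau) (dneg 1 f) (k - j)%Z)))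
      = Cmult (Phi5 tau k j) (Cmult (f j) (f (k - j)%Z))).
  { intros j. unfold c1, c2, Phi5, schr, dneg. rewrite <- !expi_mult.
    destruct (Z.eqb_spec j 0). ring. destruct (Z.eqb_spec (k - j) 0). ring.
    pose proof (ck_nz 1 j n). pose proof (ck_nz 1 (k - j) n0). fold (ci j) (ci (k - j)%Z). field. auto. }
  split.
  - apply (exC_ext _ _ Hin). apply exC_plus; apply exC_scal; auto.
  - rewrite <- (sumZC_ext _ _ Hin). rewrite sumZC_plus, !sumZC_scal; auto.
    2: apply exC_scal; auto. 2: apply exC_scal; auto.
    unfold G5, I1, fsub, fscal. unfold schr at 1. unfold fmul.
    unfold c1, c2. ring.
Qed.

Lemma Phi5_bound tau k j : 0 < tau -> k <> 0%Z -> Cmod (Phi5 tau k j) <= tau * Wt k j.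
Proof.
  intros Ht Hk. pose proof (Wt_ge1 k j Hk). unfold Phi5.
  destruct (Z.eqb_spec j 0). rewrite Cmod_0; nra. destruct (Z.eqb_spec (k - j) 0). rewrite Cmod_0; nra.
  rewrite Cmod_mult, Cmod_ihalf, Cmod_div, Cmod_mult, !Cmod_ck by (apply Cmult_neq_0; apply ck_nz; auto).
  pose proof (Cmod_1e (- tau * IZR k ^ 2 + - - tau * IZR j ^ 2 + - - tau * IZR (k - j) ^ 2)).
  assert (Eth : Rabs (- tau * IZR k ^ 2 + - - tau * IZR j ^ 2 + - - tau * IZR (k - j) ^ 2) = 2 * tau * (Rabs (IZR j) * Rabs (IZR (k - j)))).
  { replace (- tau * IZR k ^ 2 + - - tau * IZR j ^ 2 + - - tau * IZR (k - j) ^ 2) with (- (2 * tau) * (IZR j * IZR (k - j))) by (rewrite minus_IZR; ring).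
    rewrite Rabs_mult, Rabs_Ropp, (Rabs_mult (IZR j)), (Rabs_right (2 * tau)) by lra. auto. }
  rewrite Eth in H0.
  set (c := Cmod (Cminus (RtoC 1) (expi (- tau * IZR k ^ 2 + - - tau * IZR j ^ 2 + - - tau * IZR (k - j) ^ 2)))) in *.
  pose proof (Rabs_IZR_ge1 j n). pose proof (Rabs_IZR_ge1 (k - j) n0).
  rewrite !pow_1.
  apply Rle_trans with (1/2 * (2 * tau * (Rabs (IZR j) * Rabs (IZR (k - j))) / (Rabs (IZR j) * Rabs (IZR (k - j))))).
  { apply Rmult_le_compat_l. lra. apply Rmult_le_compat_r. apply Rlt_le, Rinv_0_lt_compat; nra. auto. }
  replace (1/2 * (2 * tau * (Rabs (IZR j) * Rabs (IZR (k - j))) / (Rabs (IZR j) * Rabs (IZR (k - j))))) with tau by (field; lra).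
  nra.
Qed.

Definition G6 tau f k := Cmult (RtoC 2) (I2 tau f k).

Definition Phi6 tau k j : C :=
  if Z.eqb (k - j) 0 then RtoC 0 else
  Cmult (RtoC 2) (Cmult ihalf (Cdiv (Cminus (RtoC 1) (expi (- tau * IZR k ^ 2 + - - tau * IZR j ^ 2 + - tau * IZR (k - j) ^ 2)))
    (Cmult (cpow (ci k) 1) (cpow (ci (k - j)) 1)))).

Lemma G6_form tau f k r : 1 <= r -> inH r f -> k <> 0%Z ->
  exC (fun j => Cmult (Phi6 tau k j) (Cmult (f j) (fconj f (k - j)%Z))) /\
  G6 tau f k = sumZC (fun j => Cmult (Phi6 tau k j) (Cmult (f j) (fconj f (k - j)%Z))).
Proof.
  intros Hr Hf Hk.
  set (F := fconj f).
  assert (E1 : exC (fun j => Cmult (schr (- tau) f j) (schr tau (dneg 1 F) (k - j)%Z))).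
  { apply (exC_fmul _ _ f 0 0 k r); auto. apply Gr_schr, Gr_id. apply Gr_schr, Gr_dneg, Gr_conj. }
  assert (E2 : exC (fun j => Cmult (f j) (dneg 1 F (k - j)%Z))).
  { apply (exC_fmul _ _ f 0 0 k r); auto. apply Gr_id. apply Gr_dneg, Gr_conj. }
  set (c1 := Cmult (RtoC 2) (Cdiv (Cmult (Copp ihalf) (expi (- tau * IZR k ^ 2))) (cpow (ci k) 1))).
  set (c2 := Cmult (RtoC 2) (Cdiv ihalf (cpow (ci k) 1))).
  assert (Hin : forall j, Cplus (Cmult c1 (Cmult (schr (- tau) f j) (schr tau (dneg 1 F) (k - j)%Z)))
      (Cmult c2 (Cmult (f j) (dneg 1 F (k - j)%Z)))
      = Cmult (Phi6 tau k j) (Cmult (f j) (F (k - j)%Z))).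
  { intros j. unfold c1, c2, Phi6, schr, dneg. rewrite <- !expi_mult.
    pose proof (ck_nz 1 k Hk).
    destruct (Z.eqb_spec (k - j) 0). ring.
    pose proof (ck_nz 1 (k - j) n). fold (ci (k - j)%Z). field. auto. }
  split.
  - apply (exC_ext _ _ Hin). apply exC_plus; apply exC_scal; auto.
  - rewrite <- (sumZC_ext _ _ Hin). rewrite sumZC_plus, !sumZC_scal; auto.
    2: apply exC_scal; auto. 2: apply exC_scal; auto.
    unfold G6, I2, fadd, fscal. unfold schr at 1. rewrite !dneg_nz by auto. unfold fmul, fconst. fold F.
    destruct (Z.eqb_spec k 0); [lia|].
    unfold c1, c2. pose proof (ck_nz 1 k Hk). field. auto.
Qed.

Lemma Phi6_bound tau k j : 0 < tau -> k <> 0%Z -> Cmod (Phi6 tau k j) <= 2 * tau * Wt k j.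
Proof.
  intros Ht Hk. pose proof (Wt_ge1 k j Hk). unfold Phi6.
  destruct (Z.eqb_spec (k - j) 0). rewrite Cmod_0; nra.
  rewrite !Cmod_mult, Cmod_2, Cmod_ihalf, Cmod_div, Cmod_mult, !Cmod_ck by (apply Cmult_neq_0; apply ck_nz; auto).
  pose proof (Cmod_1e (- tau * IZR k ^ 2 + - - tau * IZR j ^ 2 + - tau * IZR (k - j) ^ 2)).
  assert (Eth : Rabs (- tau * IZR k ^ 2 + - - tau * IZR j ^ 2 + - tau * IZR (k - j) ^ 2) = 2 * tau * (Rabs (IZR k) * Rabs (IZR (k - j)))).
  { replace (- tau * IZR k ^ 2 + - - tau * IZR j ^ 2 + - tau * IZR (k - j) ^ 2) with (- (2 * tau) * (IZR k * IZR (k - j))) by (rewrite minus_IZR; ring).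
    rewrite Rabs_mult, Rabs_Ropp, (Rabs_mult (IZR k)), (Rabs_right (2 * tau)) by lra. auto. }
  rewrite Eth in H0.
  set (c := Cmod (Cminus (RtoC 1) (expi (- tau * IZR k ^ 2 + - - tau * IZR j ^ 2 + - tau * IZR (k - j) ^ 2)))) in *.
  pose proof (Rabs_IZR_ge1 k Hk). pose proof (Rabs_IZR_ge1 (k - j) n).
  rewrite !pow_1.
  apply Rle_trans with (2 * (1/2 * (2 * tau * (Rabs (IZR k) * Rabs (IZR (k - j))) / (Rabs (IZR k) * Rabs (IZR (k - j)))))).
  { apply Rmult_le_compat_l. lra. apply Rmult_le_compat_l. lra. apply Rmult_le_compat_r. apply Rlt_le, Rinv_0_lt_compat; nra. auto. }
  replace (2 * (1/2 * (2 * tau * (Rabs (IZR k) * Rabs (IZR (k - j))) / (Rabs (IZR k) * Rabs (IZR (k - j)))))) with (2 * tau) by (field; lra).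
  nra.
Qed.

Lemma GD (Phi P Q P' Q' : Z -> C) (c : R) (Dl Lm : Z -> R) k :
  (forall j, Cmod (Phi j) <= c * Wt k j) ->
  exC (fun j => Cmult (Phi j) (Cmult (P j) (Q (k - j)%Z))) ->
  exC (fun j => Cmult (Phi j) (Cmult (P' j) (Q' (k - j)%Z))) ->
  (forall j, Cmod (Cminus (P j) (P' j)) <= Dl j) -> (forall j, Cmod (Q j) <= Lm j) ->
  (forall j, Cmod (P' j) <= Lm j) -> (forall j, Cmod (Cminus (Q j) (Q' j)) <= Dl j) ->
  exZ (fun j => Wt k j * (Dl j * Lm (k - j)%Z)) -> exZ (fun j => Wt k j * (Lm j * Dl (k - j)%Z)) ->
  Cmod (Cminus (sumZC (fun j => Cmult (Phi j) (Cmult (P j) (Q (k - j)%Z))))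
               (sumZC (fun j => Cmult (Phi j) (Cmult (P' j) (Q' (k - j)%Z)))))
  <= 2 * c * (sumZ (fun j => Wt k j * (Dl j * Lm (k - j)%Z)) + sumZ (fun j => Wt k j * (Lm j * Dl (k - j)%Z))).
Proof.
  intros HPhi E1 E2 H1 H2 H3 H4 Z1' Z2'.
  rewrite <- sumZC_minus by auto.
  assert (Ed : exC (fun j => Cminus (Cmult (Phi j) (Cmult (P j) (Q (k - j)%Z))) (Cmult (Phi j) (Cmult (P' j) (Q' (k - j)%Z))))) by (apply exC_minus; auto).
  eapply Rle_trans. apply sumZC_bound; auto.
  assert (Hc : forall j, 0 <= c * Wt k j) by (intros j; eapply Rle_trans; [apply Cmod_ge_0|apply HPhi]).
  destruct (Zcomp (fun j => Cmod (Cminus (Cmult (Phi j) (Cmult (P j) (Q (k - j)%Z))) (Cmult (Phi j) (Cmult (P' j) (Q' (k - j)%Z)))))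
     (fun j => c * (Wt k j * (Dl j * Lm (k - j)%Z) + Wt k j * (Lm j * Dl (k - j)%Z)))) as [_ S].
  - intros j; apply Cmod_ge_0.
  - intros j.
    replace (Cminus (Cmult (Phi j) (Cmult (P j) (Q (k - j)%Z))) (Cmult (Phi j) (Cmult (P' j) (Q' (k - j)%Z))))
      with (Cmult (Phi j) (Cplus (Cmult (Cminus (P j) (P' j)) (Q (k - j)%Z)) (Cmult (P' j) (Cminus (Q (k - j)%Z) (Q' (k - j)%Z))))) by ring.
    rewrite Cmod_mult.
    replace (c * (Wt k j * (Dl j * Lm (k - j)%Z) + Wt k j * (Lm j * Dl (k - j)%Z))) with ((c * Wt k j) * (Dl j * Lm (k - j)%Z + Lm j * Dl (k - j)%Z)) by ring.
    apply Rmult_le_compat. apply Cmod_ge_0. apply Cmod_ge_0. auto.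
    eapply Rle_trans. apply Cmod_triangle. rewrite !Cmod_mult.
    apply Rplus_le_compat; apply Rmult_le_compat; try apply Cmod_ge_0; auto.
  - apply exZ_scal, exZ_plus; auto.
  - rewrite sumZ_scal, sumZ_plus in S by auto. lra.
Qed.

Definition Xf tau f : Four :=
  fadd (fscal (RtoC 2) (L1 tau f))
  (fadd (fscal (RtoC 2) (L2 tau f))
  (fadd (L3 tau f)
  (fadd (L4 tau f)
  (fadd (I1 tau f)
        (fscal (RtoC 2) (I2 tau f)))))).

Lemma Xf_G tau f k : Xf tau f k = Cplus (G1 tau f k) (Cplus (G2 tau f k) (Cplus (G3 tau f k) (Cplus (G4 tau f k) (Cplus (G5 tau f k) (G6 tau f k))))).
Proof. reflexivity. Qed.

Definition Dl (f g : Four) j := Sf (fsub f g) j.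
Definition Lm (f g : Four) j := Sf f j + Sf g j.

Lemma Sf_nneg f : nneg (Sf f).
Proof. intros j; unfold Sf; pose proof (Cmod_ge_0 (f j)); pose proof (Cmod_ge_0 (f (- j)%Z)); lra. Qed.

Lemma Cconj_minus (a b : C) : Cminus (Cconj a) (Cconj b) = Cconj (Cminus a b).
Proof. apply injective_projections; simpl; ring. Qed.

Lemma B_id f g j : Cmod (Cminus (f j) (g j)) <= Dl f g j.
Proof. unfold Dl, Sf, fsub. pose proof (Cmod_ge_0 (Cminus (f (- j)%Z) (g (- j)%Z))). lra. Qed.
Lemma B_conj f g j : Cmod (Cminus (fconj f j) (fconj g j)) <= Dl f g j.
Proof. unfold Dl, Sf, fsub, fconj. rewrite Cconj_minus, Cmod_conj. pose proof (Cmod_ge_0 (Cminus (f j) (g j))). lra. Qed.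
Lemma B_idf f g j : Cmod (f j) <= Lm f g j.
Proof. unfold Lm, Sf. pose proof (Cmod_ge_0 (f (- j)%Z)). pose proof (Sf_nneg g j). unfold Sf in H0. lra. Qed.
Lemma B_idg f g j : Cmod (g j) <= Lm f g j.
Proof. unfold Lm, Sf. pose proof (Cmod_ge_0 (g (- j)%Z)). pose proof (Sf_nneg f j). unfold Sf in H0. lra. Qed.
Lemma B_conjf f g j : Cmod (fconj f j) <= Lm f g j.
Proof. rewrite Cmod_fconj. unfold Lm, Sf. pose proof (Cmod_ge_0 (f j)). pose proof (Sf_nneg g j). unfold Sf in H0. lra. Qed.
Lemma B_conjg f g j : Cmod (fconj g j) <= Lm f g j.
Proof. rewrite Cmod_fconj. unfold Lm, Sf. pose proof (Cmod_ge_0 (g j)). pose proof (Sf_nneg f j). unfold Sf in H0. lra. Qed.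

Lemma Xf_diff tau f g k r : 1 <= r -> 0 < tau -> inH r f -> inH r g -> k <> 0%Z ->
  exZ (fun j => Wt k j * (Dl f g j * Lm f g (k - j)%Z)) -> exZ (fun j => Wt k j * (Lm f g j * Dl f g (k - j)%Z)) ->
  Cmod (Cminus (Xf tau f k) (Xf tau g k)) <=
  24 * tau * (sumZ (fun j => Wt k j * (Dl f g j * Lm f g (k - j)%Z)) + sumZ (fun j => Wt k j * (Lm f g j * Dl f g (k - j)%Z))).
Proof.
  intros Hr Ht Hf Hg Hk Z1' Z2'.
  set (S := sumZ (fun j => Wt k j * (Dl f g j * Lm f g (k - j)%Z)) + sumZ (fun j => Wt k j * (Lm f g j * Dl f g (k - j)%Z))).
  rewrite !Xf_G.
  destruct (G1_form tau f k r Hr Hf Hk) as [e1 h1]. destruct (G1_form tau g k r Hr Hg Hk) as [e1' h1'].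
  destruct (G2_form tau f k r Hr Hf Hk) as [e2 h2]. destruct (G2_form tau g k r Hr Hg Hk) as [e2' h2'].
  destruct (G3_form tau f k r Hr Hf Hk) as [e3 h3]. destruct (G3_form tau g k r Hr Hg Hk) as [e3' h3'].
  destruct (G4_form tau f k r Hr Hf Hk) as [e4 h4]. destruct (G4_form tau g k r Hr Hg Hk) as [e4' h4'].
  destruct (G5_form tau f k r Hr Hf Hk) as [e5 h5]. destruct (G5_form tau g k r Hr Hg Hk) as [e5' h5'].
  destruct (G6_form tau f k r Hr Hf Hk) as [e6 h6]. destruct (G6_form tau g k r Hr Hg Hk) as [e6' h6'].
  pose proof (GD (Phi1 tau k) (fconj f) (fconj f) (fconj g) (fconj g) (2 * tau) (Dl f g) (Lm f g) k
     (fun j => Phi1_bound tau k j Ht Hk) e1 e1' (B_conj f g) (B_conjf f g) (B_conjg f g) (B_conj f g) Z1' Z2') as D1.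
  pose proof (GD (Phi2 tau k) (fconj f) (fconj f) (fconj g) (fconj g) (4 * tau) (Dl f g) (Lm f g) k
     (fun j => Phi2_bound tau k j Ht Hk) e2 e2' (B_conj f g) (B_conjf f g) (B_conjg f g) (B_conj f g) Z1' Z2') as D2.
  pose proof (GD (Phi3 tau k) (fconj f) (fconj f) (fconj g) (fconj g) tau (Dl f g) (Lm f g) k
     (fun j => Phi3_bound tau k j Ht Hk) e3 e3' (B_conj f g) (B_conjf f g) (B_conjg f g) (B_conj f g) Z1' Z2') as D3.
  pose proof (GD (Phi4 tau k) (fconj f) (fconj f) (fconj g) (fconj g) (2 * tau) (Dl f g) (Lm f g) k
     (fun j => Phi4_bound tau k j Ht Hk) e4 e4' (B_conj f g) (B_conjf f g) (B_conjg f g) (B_conj f g) Z1' Z2') as D4.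
  pose proof (GD (Phi5 tau k) f f g g tau (Dl f g) (Lm f g) k
     (fun j => Phi5_bound tau k j Ht Hk) e5 e5' (B_id f g) (B_idf f g) (B_idg f g) (B_id f g) Z1' Z2') as D5.
  pose proof (GD (Phi6 tau k) f (fconj f) g (fconj g) (2 * tau) (Dl f g) (Lm f g) k
     (fun j => Phi6_bound tau k j Ht Hk) e6 e6' (B_id f g) (B_conjf f g) (B_idg f g) (B_conj f g) Z1' Z2') as D6.
  rewrite <- h1, <- h1' in D1. rewrite <- h2, <- h2' in D2. rewrite <- h3, <- h3' in D3.
  rewrite <- h4, <- h4' in D4. rewrite <- h5, <- h5' in D5. rewrite <- h6, <- h6' in D6.
  fold S in D1, D2, D3, D4, D5, D6.
  set (a1 := G1 tau f k) in *. set (a2 := G2 tau f k) in *. set (a3 := G3 tau f k) in *.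
  set (a4 := G4 tau f k) in *. set (a5 := G5 tau f k) in *. set (a6 := G6 tau f k) in *.
  set (b1 := G1 tau g k) in *. set (b2 := G2 tau g k) in *. set (b3 := G3 tau g k) in *.
  set (b4 := G4 tau g k) in *. set (b5 := G5 tau g k) in *. set (b6 := G6 tau g k) in *.
  replace (Cminus (Cplus a1 (Cplus a2 (Cplus a3 (Cplus a4 (Cplus a5 a6))))) (Cplus b1 (Cplus b2 (Cplus b3 (Cplus b4 (Cplus b5 b6))))))
    with (Cplus (Cminus a1 b1) (Cplus (Cminus a2 b2) (Cplus (Cminus a3 b3) (Cplus (Cminus a4 b4) (Cplus (Cminus a5 b5) (Cminus a6 b6)))))) by ring.
  repeat (eapply Rle_trans; [apply Cmod_triangle| apply Rplus_le_compat_l]) || idtac.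
  pose proof (Cmod_triangle (Cminus a1 b1) (Cplus (Cminus a2 b2) (Cplus (Cminus a3 b3) (Cplus (Cminus a4 b4) (Cplus (Cminus a5 b5) (Cminus a6 b6)))))).
  pose proof (Cmod_triangle (Cminus a2 b2) (Cplus (Cminus a3 b3) (Cplus (Cminus a4 b4) (Cplus (Cminus a5 b5) (Cminus a6 b6))))).
  pose proof (Cmod_triangle (Cminus a3 b3) (Cplus (Cminus a4 b4) (Cplus (Cminus a5 b5) (Cminus a6 b6)))).
  pose proof (Cmod_triangle (Cminus a4 b4) (Cplus (Cminus a5 b5) (Cminus a6 b6))).
  pose proof (Cmod_triangle (Cminus a5 b5) (Cminus a6 b6)).
  lra.
Qed.

Lemma Cmod_psi1 tau k : Cmod (psi1_sym tau k) <= 1.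
Proof.
  unfold psi1_sym. destruct (Req_EM_T (- 2 * tau * IZR k ^ 2) 0).
  - rewrite Cmod_1; lra.
  - assert (Cmult Ci (RtoC (- 2 * tau * IZR k ^ 2)) <> RtoC 0).
    { intros E. apply (f_equal Cmod) in E. rewrite Cmod_iR, Cmod_0 in E. apply Rabs_eq_0 in E. auto. }
    rewrite Cmod_div by auto. rewrite Cmod_iR.
    pose proof (Cmod_expi_1 (- 2 * tau * IZR k ^ 2)). pose proof (Rabs_pos_lt _ n).
    apply Rmult_le_reg_r with (Rabs (- 2 * tau * IZR k ^ 2)); auto.
    unfold Rdiv. rewrite Rmult_assoc, Rinv_l by lra. lra.
Qed.

Lemma omega_ge k : IZR k ^ 2 <= omega k.
Proof.
  unfold omega. rewrite <- (sqrt_pow2 (IZR k ^ 2)) at 1 by apply pow2_ge_0.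
  apply sqrt_le_1_alt. pose proof (pow2_ge_0 (IZR k)). replace ((IZR k ^ 2) ^ 2) with (IZR k ^ 4) by ring. pose proof (pow2_ge_0 (IZR k ^ 2)). lra.
Qed.

Lemma Cmod_Bsym k : k <> 0%Z -> Cmod (RtoC (- IZR k ^ 2 / omega k)) <= 1.
Proof.
  intros Hk. rewrite Cmod_R. pose proof (k2_pos k Hk). pose proof (omega_ge k).
  unfold Rdiv. rewrite Rabs_mult, Rabs_Ropp, Rabs_right, Rabs_right by (try apply Rle_ge, Rlt_le, Rinv_0_lt_compat; lra).
  apply Rmult_le_reg_r with (omega k). lra. rewrite Rmult_assoc, Rinv_l by lra. lra.
Qed.

Lemma Dk_bound a b tn tau f g k : 0 < tau ->
  Cmod (fsub (Psi1 a b tn tau f) (Psi1 a b tn tau g) k) <=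
  (1 + tau * Rabs (a * tn + b)) * Cmod (fsub f g k) + tau * Rabs (a * tn + b) * Cmod (fsub f g (- k)%Z)
  + (if Z.eqb k 0 then 0 else / 4 * Cmod (Cminus (Xf tau f k) (Xf tau g k))).
Proof.
  intros Ht.
  assert (P0 : 0 <= tau * Rabs (a * tn + b)) by (apply Rmult_le_pos; [lra|apply Rabs_pos]).
  pose proof (Cmod_ge_0 (fsub f g k)). pose proof (Cmod_ge_0 (fsub f g (- k)%Z)).
  unfold Psi1. fold (Xf tau f) (Xf tau g). unfold fsub, fscal, Btau, Bop, eomega, fadd, psi1op.
  destruct (Z.eqb_spec k 0).
  - replace (Cminus (Cminus (Cminus (Cmult (expi (tau * omega k)) (f k)) (Cmult (Cmult Ci (RtoC (1 / 4))) (RtoC 0)))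
        (Cmult (Cmult Ci (RtoC (tau * (a * tn + b)))) (RtoC 0)))
        (Cminus (Cminus (Cmult (expi (tau * omega k)) (g k)) (Cmult (Cmult Ci (RtoC (1 / 4))) (RtoC 0)))
        (Cmult (Cmult Ci (RtoC (tau * (a * tn + b)))) (RtoC 0))))
      with (Cmult (expi (tau * omega k)) (Cminus (f k) (g k))) by ring.
    rewrite Cmod_mult, Cmod_expi. pose proof (Cmod_ge_0 (Cminus (f k) (g k))). pose proof (Cmod_ge_0 (Cminus (f (-k)%Z) (g (-k)%Z))). nra.
  - set (be := Cmult (RtoC (- IZR k ^ 2 / omega k)) (expi (tau * omega k))).
    set (ps := psi1_sym tau k).
    match goal with |- Cmod ?L <= _ =>
      replace L with (Cminus (Cminus (Cmult (expi (tau * omega k)) (Cminus (f k) (g k)))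
         (Cmult (Cmult (Cmult Ci (RtoC (1 / 4))) be) (Cminus (Xf tau f k) (Xf tau g k))))
         (Cmult (Cmult (Cmult Ci (RtoC (tau * (a * tn + b)))) be)
            (Cplus (Cminus (f k) (g k)) (Cmult ps (Cminus (fconj f k) (fconj g k)))))) by (unfold be, ps; ring) end.
    assert (Hbe : Cmod be <= 1) by (unfold be; rewrite Cmod_mult, Cmod_expi, Rmult_1_r; apply Cmod_Bsym; auto).
    pose proof (Cmod_psi1 tau k). fold ps in H1.
    assert (Hfc : Cmod (Cminus (fconj f k) (fconj g k)) = Cmod (Cminus (f (- k)%Z) (g (- k)%Z))).
    { unfold fconj. rewrite Cconj_minus, Cmod_conj. auto. }
    unfold Cminus at 1. eapply Rle_trans. apply Cmod_triangle. rewrite Cmod_opp.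
    unfold Cminus at 1. eapply Rle_trans. apply Rplus_le_compat_r. apply Cmod_triangle. rewrite Cmod_opp.
    rewrite !Cmod_mult, Cmod_expi, !Cmod_Ci, !Cmod_R, !Rmult_1_l.
    rewrite (Rabs_right (1/4)) by lra. rewrite Rabs_mult, (Rabs_right tau) by lra.
    pose proof (Cmod_ge_0 be). pose proof (Cmod_ge_0 ps). pose proof (Cmod_ge_0 (Cminus (Xf tau f k) (Xf tau g k))).
    assert (T1 : Cmod (Cplus (Cminus (f k) (g k)) (Cmult ps (Cminus (fconj f k) (fconj g k)))) <= Cmod (Cminus (f k) (g k)) + Cmod (Cminus (f (- k)%Z) (g (- k)%Z))).
    { eapply Rle_trans. apply Cmod_triangle. rewrite Cmod_mult, Hfc. apply Rplus_le_compat_l.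
      pose proof (Cmod_ge_0 (Cminus (f (- k)%Z) (g (- k)%Z))). nra. }
    pose proof (Cmod_ge_0 (Cplus (Cminus (f k) (g k)) (Cmult ps (Cminus (fconj f k) (fconj g k))))).
    assert (T2 : 1 / 4 * Cmod be * Cmod (Cminus (Xf tau f k) (Xf tau g k)) <= / 4 * Cmod (Cminus (Xf tau f k) (Xf tau g k))).
    { replace (/4) with (1/4 * 1) by field. apply Rmult_le_compat_r; auto. apply Rmult_le_compat_l; lra. }
    assert (T3 : tau * Rabs (a * tn + b) * Cmod be * Cmod (Cplus (Cminus (f k) (g k)) (Cmult ps (Cminus (fconj f k) (fconj g k))))
       <= tau * Rabs (a * tn + b) * (Cmod (Cminus (f k) (g k)) + Cmod (Cminus (f (- k)%Z) (g (- k)%Z)))).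
    { rewrite Rmult_assoc. apply Rmult_le_compat_l; auto. nra. }
    lra.
Qed.

Lemma Sf_L2 r h : inH r h -> Lsq (fun j => rho r j * Sf h j) /\ N2 (fun j => rho r j * Sf h j) <= 2 * normH r h.
Proof.
  intros H. apply inH_L2 in H.
  destruct (N2_refl (Rf r h) 0%Z H) as [H' N'].
  destruct (Mink (Rf r h) (fun j => Rf r h (0 - j)%Z)) as [HM NM]; auto. apply Rf_nneg. intros j; apply Rf_nneg.
  assert (E : forall j, rho r j * Sf h j = Rf r h j + Rf r h (0 - j)%Z).
  { intros j. unfold Sf, Rf. replace (0 - j)%Z with (- j)%Z by lia. rewrite rho_neg. ring. }
  split. apply (exZ_ext (fun j => (Rf r h j + Rf r h (0 - j)%Z) ^ 2)); auto. intros; rewrite E; auto.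
  rewrite normH_N2. unfold N2 at 1. rewrite (sumZ_ext _ (fun j => (Rf r h j + Rf r h (0 - j)%Z) ^ 2)) by (intros; rewrite E; auto).
  fold (N2 (fun j => Rf r h j + Rf r h (0 - j)%Z)). lra.
Qed.

Lemma rho_Sf_nneg r h : nneg (fun j => rho r j * Sf h j).
Proof. intros j. apply Rmult_le_pos. apply Rlt_le, rho_pos. apply Sf_nneg. Qed.

Theorem lemma9 :
  forall (a b tn : R), 0 <= tn ->
  forall (r : R), 1 <= r ->
  forall (K : R), exists M : R,
  forall (f g : Four) (tau : R),
    inH r f -> inH r g -> normH r f + normH r g <= K -> 0 < tau ->
    inH r (fsub (Psi1 a b tn tau f) (Psi1 a b tn tau g)) /\
    normH r (fsub (Psi1 a b tn tau f) (Psi1 a b tn tau g))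
      <= (1 + M * tau) * normH r (fsub f g).
Proof.
  intros a b tn Htn r Hr K.
  set (cc := Rabs (a * tn + b)).
  exists (2 * cc + 48 * (Cp r * sqrt 60) * Rabs K).
  intros f g tau Hf Hg HK Ht.
  set (d := fsub f g).
  assert (Hd : inH r d).
  { apply L2_inH. apply (N2_dom (fun j => Rf r f j + Rf r g j)).
    apply Rf_nneg. intros j. unfold Rf, d, fsub. rewrite <- Rmult_plus_distr_l. apply Rmult_le_compat_l. apply Rlt_le, rho_pos.
    unfold Cminus. eapply Rle_trans. apply Cmod_triangle. rewrite Cmod_opp. lra.
    apply Mink. apply Rf_nneg. apply Rf_nneg. apply inH_L2; auto. apply inH_L2; auto. }
  assert (nf0 : 0 <= normH r f) by (rewrite normH_N2; apply N2_nonneg).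
  assert (ng0 : 0 <= normH r g) by (rewrite normH_N2; apply N2_nonneg).
  assert (nd0 : 0 <= normH r d) by (rewrite normH_N2; apply N2_nonneg).
  set (Dd := Dl f g). set (Ll := Lm f g).
  destruct (Sf_L2 r d Hd) as [LD ND].
  destruct (Sf_L2 r f Hf) as [LF NF]. destruct (Sf_L2 r g Hg) as [LG NG].
  destruct (Mink (fun j => rho r j * Sf f j) (fun j => rho r j * Sf g j)) as [LL NL]; auto using rho_Sf_nneg.
  assert (LL' : Lsq (fun j => rho r j * Ll j)).
  { apply (exZ_ext (fun j => (rho r j * Sf f j + rho r j * Sf g j) ^ 2)); auto. intros j; unfold Ll, Lm; f_equal; ring. }
  assert (NL' : N2 (fun j => rho r j * Ll j) <= 2 * K).
  { unfold N2. rewrite (sumZ_ext _ (fun j => (rho r j * Sf f j + rho r j * Sf g j) ^ 2)) by (intros j; unfold Ll, Lm; f_equal; ring).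
    fold (N2 (fun j => rho r j * Sf f j + rho r j * Sf g j)). lra. }
  assert (HDn : nneg Dd) by apply Sf_nneg.
  assert (HLn : nneg Ll) by (intros j; unfold Ll, Lm; pose proof (Sf_nneg f j); pose proof (Sf_nneg g j); lra).
  assert (LD' : Lsq (fun j => rho r j * Dd j)) by exact LD.
  assert (ND' : N2 (fun j => rho r j * Dd j) <= 2 * normH r d) by exact ND.
  destruct (bil r Dd Ll Hr HDn HLn LD' LL') as [X1 [T1n [T1L T1N]]].
  destruct (bil r Ll Dd Hr HLn HDn LL' LD') as [X2 [T2n [T2L T2N]]].
  set (u1 := fun k => (1 + tau * cc) * Rf r d k).
  set (u2 := fun k => tau * cc * Rf r d (0 - k)%Z).
  set (u3 := fun k => 6 * tau * (rho r k * Tb Dd Ll k)).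
  set (u4 := fun k => 6 * tau * (rho r k * Tb Ll Dd k)).
  assert (cc0 : 0 <= cc) by apply Rabs_pos.
  assert (Ld : Lsq (Rf r d)) by (apply inH_L2; auto).
  destruct (N2_scal (1 + tau * cc) (Rf r d)) as [L1' N1']; auto. nra.
  destruct (N2_refl (Rf r d) 0%Z Ld) as [Ldr Ndr].
  destruct (N2_scal (tau * cc) (fun k => Rf r d (0 - k)%Z)) as [L2' N2']; auto. nra.
  destruct (N2_scal (6 * tau) (fun k => rho r k * Tb Dd Ll k)) as [L3' N3']; auto. lra.
  destruct (N2_scal (6 * tau) (fun k => rho r k * Tb Ll Dd k)) as [L4' N4']; auto. lra.
  assert (n1 : nneg u1) by (intros k; unfold u1; apply Rmult_le_pos; [pose proof (Rmult_le_pos tau cc ltac:(lra) cc0); lra| apply Rf_nneg]).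
  assert (n2 : nneg u2) by (intros k; unfold u2; apply Rmult_le_pos; [apply Rmult_le_pos; lra| apply Rf_nneg]).
  assert (n3 : nneg u3) by (intros k; unfold u3; apply Rmult_le_pos; [lra| apply Rmult_le_pos; [apply Rlt_le, rho_pos| apply T1n]]).
  assert (n4 : nneg u4) by (intros k; unfold u4; apply Rmult_le_pos; [lra| apply Rmult_le_pos; [apply Rlt_le, rho_pos| apply T2n]]).
  destruct (Mink u3 u4 n3 n4 L3' L4') as [L34 N34].
  assert (n34 : nneg (fun k => u3 k + u4 k)) by (intros k; pose proof (n3 k); pose proof (n4 k); lra).
  destruct (Mink u2 (fun k => u3 k + u4 k) n2 n34 L2' L34) as [L234 N234].
  assert (n234 : nneg (fun k => u2 k + (u3 k + u4 k))) by (intros k; pose proof (n2 k); pose proof (n34 k); simpl in *; lra).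
  destruct (Mink u1 (fun k => u2 k + (u3 k + u4 k)) n1 n234 L1' L234) as [Lz Nz].
  assert (Dom : forall k, Rf r (fsub (Psi1 a b tn tau f) (Psi1 a b tn tau g)) k <= u1 k + (u2 k + (u3 k + u4 k))).
  { intros k. unfold Rf. pose proof (Dk_bound a b tn tau f g k Ht) as Hb. fold cc in Hb.
    pose proof (rho_pos r k) as Hrho.
    assert (E2 : rho r k * Cmod (fsub f g (- k)%Z) = Rf r d (0 - k)%Z).
    { unfold Rf, d. replace (0 - k)%Z with (- k)%Z by lia. rewrite rho_neg. auto. }
    assert (Hx : (if Z.eqb k 0 then 0 else / 4 * Cmod (Cminus (Xf tau f k) (Xf tau g k))) <= 6 * tau * (Tb Dd Ll k + Tb Ll Dd k)).
    { destruct (Z.eqb_spec k 0).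
      - pose proof (T1n k). pose proof (T2n k). nra.
      - unfold Tb. destruct (Z.eqb_spec k 0); [lia|].
        pose proof (Xf_diff tau f g k r Hr Ht Hf Hg n (X1 k n) (X2 k n)). fold Dd Ll in H. lra. }
    unfold u1, u2, u3, u4. rewrite <- E2. unfold Rf, d.
    apply Rle_trans with (rho r k * ((1 + tau * cc) * Cmod (fsub f g k) + tau * cc * Cmod (fsub f g (- k)%Z) + 6 * tau * (Tb Dd Ll k + Tb Ll Dd k))).
    apply Rmult_le_compat_l. lra. lra. right; ring. }
  assert (Hn : nneg (Rf r (fsub (Psi1 a b tn tau f) (Psi1 a b tn tau g)))) by apply Rf_nneg.
  destruct (N2_dom _ _ Hn Dom Lz) as [LR NR].
  split. apply L2_inH; auto.
  rewrite normH_N2. eapply Rle_trans. apply NR. eapply Rle_trans. apply Nz.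
  unfold u1 at 1. rewrite N1', <- normH_N2. fold d.
  assert (N2 u2 <= tau * cc * normH r d) by (unfold u2; rewrite N2', Ndr, <- normH_N2; lra).
  assert (N2 u3 <= 6 * tau * (Cp r * sqrt 60 * (2 * normH r d * (2 * Rabs K)))).
  { unfold u3. rewrite N3'. apply Rmult_le_compat_l. lra. eapply Rle_trans. apply T1N.
    assert (0 <= Cp r * sqrt 60) by (apply Rmult_le_pos; [unfold Cp; pose proof (Rpower_pos 4 (r/2)); lra| apply sqrt_pos]).
    apply Rmult_le_compat_l; auto. apply Rmult_le_compat; try apply N2_nonneg; auto.
    pose proof (Rle_abs K). lra. }
  assert (N2 u4 <= 6 * tau * (Cp r * sqrt 60 * (2 * Rabs K * (2 * normH r d)))).
  { unfold u4. rewrite N4'. apply Rmult_le_compat_l. lra. eapply Rle_trans. apply T2N.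
    assert (0 <= Cp r * sqrt 60) by (apply Rmult_le_pos; [unfold Cp; pose proof (Rpower_pos 4 (r/2)); lra| apply sqrt_pos]).
    apply Rmult_le_compat_l; auto. apply Rmult_le_compat; try apply N2_nonneg; auto.
    pose proof (Rle_abs K). lra. }
  assert (N2 (fun k => u2 k + (u3 k + u4 k)) <= tau * cc * normH r d + 6 * tau * (Cp r * sqrt 60 * (2 * normH r d * (2 * Rabs K))) + 6 * tau * (Cp r * sqrt 60 * (2 * Rabs K * (2 * normH r d)))) by lra.
  assert (E : (1 + (2 * cc + 48 * (Cp r * sqrt 60) * Rabs K) * tau) * normH r d =
     (1 + tau * cc) * normH r d + (tau * cc * normH r d + 6 * tau * (Cp r * sqrt 60 * (2 * normH r d * (2 * Rabs K))) + 6 * tau * (Cp r * sqrt 60 * (2 * Rabs K * (2 * normH r d))))) by ring.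
  rewrite E. lra.
Qed.
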